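(* Let $\alpha>-1/2$, $n\in\mathbb{Z}_0^+$, assume $f\in C^{n+1}[-1,1]$ with $\|f^{(n+1)}\|_{L^\infty[-1,1]}\le A$ for a constant $A>0$ independent of $n$, and let $\int_{-1}^{x_{n,j}^{(\alpha)}}f(x)\,dx$ be approximated by the barycentric Gegenbauer quadrature $\sum_{i=0}^n p_{B,j,i}^{(1)}f(x_{n,i}^{(\alpha)})$ for each GG node $x_{n,j}^{(\alpha)}$, $j=0,\dots,n$, with truncation error $E_n^{(\alpha)}(x_{n,j}^{(\alpha)},\zeta_{n,j}^{(\alpha)})$. Then there exist positive constants $D_1^{(\alpha)},D_2^{(\alpha)}$ independent of $n$ such that: (i) if $\alpha\ge0$: $|E_n^{(\alpha)}|\le \dfrac{A\,2^{-n}(x_{n,j}^{(\alpha)}+1)\,\Gamma(\alpha+1)\,\Gamma(n+2\alpha+1)}{\Gamma(2\alpha+1)\,\Gamma(n+2)\,\Gamma(n+\alpha+1)}$; (ii) if $\frac{n+1}{2}\in\mathbb{Z}^+$ and $-\frac12<\alpha<0$: $|E_n^{(\alpha)}|\le \dfrac{A\,2^{-n-1}(x_{n,j}^{(\alpha)}+1)\,\Gamma(\alpha)}{\Gamma(n+\alpha+1)}\dbinom{\frac{n-1}{2}+\alpha}{\frac{n+1}{2}}$; (iii) if $\frac n2\in\mathbb{Z}_0^+$ and $-\frac12<\alpha<0$: $|E_n^{(\alpha)}|< \dfrac{A\,2^{-n}(x_{n,j}^{(\alpha)}+1)\,\Gamma(\alpha+1)}{\sqrt{(n+1)(2\alpha+n+1)}\,\Gamma(n+\alpha+1)}\dbinom{\frac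 n2+\alpha}{\frac n2}$. Moreover, as $n\to\infty$, asymptotically $|E_n^{(\alpha)}|\lesssim B_1^{(\alpha)}(e/2)^n(x_{n,j}^{(\alpha)}+1)\,n^{\alpha-n-3/2}$ if $\alpha\ge0$, and $|E_n^{(\alpha)}|\lesssim B_2^{(\alpha)}(e/2)^n(x_{n,j}^{(\alpha)}+1)\,n^{-n-3/2}$ if $-\frac12<\alpha<0$, for all $j=0,\dots,n$, where $B_1^{(\alpha)}=AD_1^{(\alpha)}$ and $B_2^{(\alpha)}=B_1^{(\alpha)}D_2^{(\alpha)}$.
   Context: For $\alpha>-1/2$ and integer $n\ge0$, the Gegenbauer polynomial $G_n^{(\alpha)}$ is the Jacobi polynomial $P_n^{(\alpha-1/2,\alpha-1/2)}$ normalized so that $G_n^{(\alpha)}(1)=1$; $K_n^{(\alpha)}$ is its leading coefficient. GG nodes $x_{n,0}^{(\alpha)},\dots,x_{n,n}^{(\alpha)}$ are the zeros of $G_{n+1}^{(\alpha)}$. The barycentric GIM entries are $p_{B,j,i}^{(1)}=\int_{-1}^{x_{n,j}^{(\alpha)}}\mathcal{L}_{B,n,i}^{(\alpha)}(x)\,dx$, where $\mathcal{L}_{B,n,i}^{(\alpha)}$ is the degree-$n$ Lagrange basis polynomial at the GG nodes. The truncation error is $E_n^{(\alpha)}(x_{n,j}^{(\alpha)},\zeta_{n,j}^{(\alpha)})=\frac{f^{(n+1)}(\zeta_{n,j}^{(\alpha)})}{(n+1)!\,K_{n+1}^{(\alpha)}}\int_{-1}^{x_{n,j}^{(\alpha)}}G_{n+1}^{(\alpha)}(x)\,dx$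 for some $\zeta_{n,j}^{(\alpha)}\in[-1,1]$. Binomial coefficients with non-integer upper argument are $\binom{a}{b}=\Gamma(a+1)/(\Gamma(b+1)\Gamma(a-b+1))$. The symbol $\lesssim$ denotes an asymptotic inequality as $n\to\infty$. *)

(* Defs.v *)
From Stdlib Require Import Reals Lra Lia Arith Factorial ClassicalEpsilon.
Open Scope R_scope.

Definition gauss_seq (x : R) (m : nat) : R :=
  INR (fact m) * Rpower (INR m) x / prod_f_R0 (fun k => x + INR k) m.

Definition Gamma (x : R) : R :=
  epsilon (inhabits 0) (fun g => Un_cv (gauss_seq x) g).

Definition binomR (a b : R) : R :=
  Gamma (a + 1) / (Gamma (b + 1) * Gamma (a - b + 1)).

Definition Rint (g : R -> R) (a b : R) : R :=
  epsilon (inhabits 0)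
    (fun I => exists pr : Riemann_integrable g a b, RiemannInt pr = I).

(* Coefficient sequences (coefficient of x^k), generated by the three-term
   recurrence of the normalized Gegenbauer polynomials (G_n(1) = 1):
     G_0 = 1,  G_1 = x,
     (N + 2a) G_{N+1}(x) = 2 (N + a) x G_N(x) - N G_{N-1}(x),  N >= 1.
   Gpair a m = (coeffs of G_m, coeffs of G_{m+1}). *)
Fixpoint Gpair (a : R) (m : nat) : (nat -> R) * (nat -> R) :=
  match m with
  | O => (fun k => if Nat.eqb k 0 then 1 else 0,
          fun k => if Nat.eqb k 1 then 1 else 0)
  | S m' =>
      let (p, q) := Gpair a m' in
      (q, fun k =>
            (2 * (INR m' + 1 + a) * (match k with O => 0 | S k' => q k' end)
             - (INR m' + 1) * p k) / (INR m' + 1 + 2 * a))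
  end.

Definition Gcoef (a : R) (n k : nat) : R := fst (Gpair a n) k.

Definition Geg (a : R) (n : nat) (x : R) : R :=
  sum_f_R0 (fun k => Gcoef a n k * x ^ k) n.

Definition Klead (a : R) (n : nat) : R := Gcoef a n n.

Definition Icc (x : R) : Prop := -1 <= x <= 1.

Definition deriv_within (g : R -> R) (x l : R) : Prop :=
  forall eps, 0 < eps -> exists delta, 0 < delta /\
    forall h, h <> 0 -> Rabs h < delta -> Icc (x + h) ->
      Rabs ((g (x + h) - g x) / h - l) < eps.

Definition cont_within (g : R -> R) (x : R) : Prop :=
  forall eps, 0 < eps -> exists delta, 0 < delta /\
    forall y, Icc y -> Rabs (y - x) < delta -> Rabs (g y - g x) < eps.

(* fd k is the k-th derivative of f on [-1,1] for k <= m, and fd m is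
   continuous on [-1,1]: this says f in C^m[-1,1] with f^{(k)} = fd k. *)
Definition derivs_C (m : nat) (f : R -> R) (fd : nat -> R -> R) : Prop :=
  (forall x, Icc x -> fd O x = f x) /\
  (forall k, (k < m)%nat -> forall x, Icc x -> deriv_within (fd k) x (fd (S k) x)) /\
  (forall x, Icc x -> cont_within (fd m) x).

Definition Eerr (a : R) (n : nat) (fd : nat -> R -> R) (x zeta : R) : R :=
  fd (S n) zeta / (INR (fact (S n)) * Klead a (S n))
  * Rint (Geg a (S n)) (-1) x.

(* Main.v *)
Require Import Defs.
From Stdlib Require Import Reals Lra Lia Arith Factorial ClassicalEpsilon.
From Coquelicot Require Import Coquelicot.
Open Scope R_scope.

Lemma exp_ge1 (y : R) : 1 + y <= exp y.
Proof. destruct (Req_dec y 0) as [->|H]. rewrite exp_0; lra. left; now apply exp_ineq1. Qed.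

Lemma ln_le_xm1 (y : R) : 0 < y -> ln y <= y - 1.
Proof. intros Hy. pose proof (exp_ge1 (ln y)). rewrite exp_ln in H; lra. Qed.

Lemma ln_ge_1mi (y : R) : 0 < y -> 1 - / y <= ln y.
Proof. intros Hy. pose proof (ln_le_xm1 (/ y) (Rinv_0_lt_compat _ Hy)).
  rewrite ln_Rinv in H; lra. Qed.

Lemma tele_up (u : nat -> R) (C : R) :
  (forall m, (1 <= m)%nat -> u (S m) <= u m * exp (C * (/ INR m - / INR (S m)))) ->
  forall m, (1 <= m)%nat -> u m <= u 1%nat * exp (C * (1 - / INR m)).
Proof.
  intros H m Hm. induction m as [|m IH]. lia.
  destruct (Nat.eq_dec m 0) as [->|Hm0].
  - simpl. replace (C * (1 - / 1)) with 0 by (field). rewrite exp_0. lra.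
  - assert (Hm1 : (1 <= m)%nat) by lia. specialize (IH Hm1).
    eapply Rle_trans. apply H; lia.
    replace (C * (1 - / INR (S m))) with (C * (1 - / INR m) + C * (/ INR m - / INR (S m))) by ring.
    rewrite exp_plus, <- Rmult_assoc. apply Rmult_le_compat_r. left; apply exp_pos. exact IH.
Qed.

Lemma tele_low (u : nat -> R) (C : R) :
  (forall m, (1 <= m)%nat -> u m * exp (- (C * (/ INR m - / INR (S m)))) <= u (S m)) ->
  forall m, (1 <= m)%nat -> u 1%nat * exp (- (C * (1 - / INR m))) <= u m.
Proof.
  intros H m Hm. induction m as [|m IH]. lia.
  destruct (Nat.eq_dec m 0) as [->|Hm0].
  - simpl. replace (- (C * (1 - / 1))) with 0 by (field). rewrite exp_0. lra.
  - assert (Hm1 : (1 <= m)%nat) by lia. specialize (IH Hm1).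
    eapply Rle_trans. 2: apply H; lia.
    replace (- (C * (1 - / INR (S m)))) with (- (C * (1 - / INR m)) + - (C * (/ INR m - / INR (S m)))) by ring.
    rewrite exp_plus, <- Rmult_assoc. apply Rmult_le_compat_r. left; apply exp_pos. exact IH.
Qed.

Lemma INRpos (m : nat) : (1 <= m)%nat -> 0 < INR m.
Proof. intros; apply lt_0_INR; lia. Qed.

Lemma prod_S (f : nat -> R) (n : nat) : prod_f_R0 f (S n) = prod_f_R0 f n * f (S n).
Proof. reflexivity. Qed.

Lemma prod_pos (x : R) (m : nat) : 0 < x -> 0 < prod_f_R0 (fun k => x + INR k) m.
Proof. intros Hx; induction m. simpl; lra. rewrite prod_S. apply Rmult_lt_0_compat; auto. pose proof (pos_INR (S m)); lra. Qed.

Lemma gauss_S (x : R) (m : nat) : 0 < x -> (1 <= m)%nat ->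
  gauss_seq x (S m) = gauss_seq x m * (INR (S m) * exp (x * (ln (INR (S m)) - ln (INR m))) / (x + INR (S m))).
Proof.
  intros Hx Hm. pose proof (prod_pos x m Hx). pose proof (pos_INR (S m)). unfold gauss_seq, Rpower. rewrite prod_S.
  rewrite fact_simpl, mult_INR.
  replace (x * (ln (INR (S m)) - ln (INR m))) with (x * ln (INR (S m)) + - (x * ln (INR m))) by ring.
  rewrite exp_plus, exp_Ropp.
  assert (exp (x * ln (INR m)) <> 0) by (apply Rgt_not_eq, exp_pos).
  field. repeat split; try lra. 
Qed.

Lemma exp_le (x y : R) : x <= y -> exp x <= exp y.
Proof. intros [H|H]. left; now apply exp_increasing. subst; lra. Qed.

Lemma ln_S_bounds (m : nat) : (1 <= m)%nat ->
  / INR (S m) <= ln (INR (S m)) - ln (INR m) <= / INR m.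
Proof.
  intros Hm. pose proof (INRpos m Hm) as H0. rewrite S_INR.
  assert (E : ln (INR m + 1) - ln (INR m) = ln ((INR m + 1) / INR m)).
  { unfold Rdiv. rewrite ln_mult, ln_Rinv; try lra. apply Rinv_0_lt_compat; lra. }
  rewrite E. assert (P : 0 < (INR m + 1) / INR m) by (apply Rdiv_lt_0_compat; lra).
  split.
  - eapply Rle_trans. 2: apply ln_ge_1mi; auto. right. field. lra.
  - eapply Rle_trans. apply ln_le_xm1; auto. right. field. lra.
Qed.

Lemma gauss_pos (x : R) (m : nat) : 0 < x -> 0 < gauss_seq x m.
Proof.
  intros Hx. unfold gauss_seq. apply Rdiv_lt_0_compat. apply Rmult_lt_0_compat.
  apply lt_0_INR, lt_O_fact. unfold Rpower; apply exp_pos. apply prod_pos; auto.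
Qed.

Lemma gauss_ratio_low (x : R) (m : nat) : 0 < x -> (1 <= m)%nat ->
  1 <= INR (S m) * exp (x * (ln (INR (S m)) - ln (INR m))) / (x + INR (S m)).
Proof.
  intros Hx Hm. destruct (ln_S_bounds m Hm) as [L U].
  pose proof (INRpos (S m) ltac:(lia)) as HS.
  pose proof (exp_ge1 (x * (ln (INR (S m)) - ln (INR m)))) as E.
  assert (x * / INR (S m) <= x * (ln (INR (S m)) - ln (INR m))) by (apply Rmult_le_compat_l; lra).
  apply (Rmult_le_reg_r (x + INR (S m))). lra.
  unfold Rdiv. rewrite Rmult_assoc, Rinv_l, Rmult_1_r, Rmult_1_l by lra.
  replace (x + INR (S m)) with (INR (S m) * (1 + x * / INR (S m))) by (field; lra).
  apply Rmult_le_compat_l; lra.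
Qed.

Lemma gauss_ratio_up (x : R) (m : nat) : 0 < x -> (1 <= m)%nat ->
  INR (S m) * exp (x * (ln (INR (S m)) - ln (INR m))) / (x + INR (S m))
  <= exp (x * (1 + x) * (/ INR m - / INR (S m))).
Proof.
  intros Hx Hm. destruct (ln_S_bounds m Hm) as [L U].
  pose proof (INRpos m Hm) as H0.
  pose proof (INRpos (S m) ltac:(lia)) as HS.
  assert (E1 : exp (x * (ln (INR (S m)) - ln (INR m))) <= exp (x / INR m)).
  { apply exp_le. unfold Rdiv. apply Rmult_le_compat_l; lra. }
  assert (E2 : INR (S m) / (x + INR (S m)) <= exp (- (x / (x + INR (S m))))).
  { eapply Rle_trans. 2: apply exp_ge1. right. field. lra. }
  assert (E3 : x / INR m + - (x / (x + INR (S m))) <= x * (1 + x) * (/ INR m - / INR (S m))).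
  { rewrite S_INR in *.
    replace (x / INR m + - (x / (x + (INR m + 1)))) with (x * (1 + x) / (INR m * (INR m + 1 + x))) by (field; lra).
    replace (x * (1 + x) * (/ INR m - / (INR m + 1))) with (x * (1 + x) / (INR m * (INR m + 1))) by (field; lra).
    unfold Rdiv. apply Rmult_le_compat_l. nra.
    apply Rinv_le_contravar. nra. nra. }
  eapply Rle_trans. 2: apply exp_le, E3. rewrite exp_plus.
  replace (INR (S m) * exp (x * (ln (INR (S m)) - ln (INR m))) / (x + INR (S m)))
    with (exp (x * (ln (INR (S m)) - ln (INR m))) * (INR (S m) / (x + INR (S m)))) by (field; lra).
  apply Rmult_le_compat; auto. left; apply exp_pos. unfold Rdiv; apply Rmult_le_pos; [lra| left; apply Rinv_0_lt_compat; lra].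
Qed.

Lemma Un_cv_shift (u : nat -> R) (l : R) : Un_cv (fun k => u (S k)) l -> Un_cv u l.
Proof.
  intros H eps He. destruct (H eps He) as [N HN]. exists (S N). intros n Hn.
  destruct n. lia. apply HN. lia.
Qed.

Lemma gauss_cv (x : R) : 0 < x -> exists l, Un_cv (gauss_seq x) l /\ 0 < l.
Proof.
  intros Hx.
  set (v := fun k => gauss_seq x (S k)).
  assert (Hg : Un_growing v).
  { intros k. unfold v. rewrite (gauss_S x (S k)) by (auto; lia).
    pose proof (gauss_pos x (S k) Hx). pose proof (gauss_ratio_low x (S k) Hx ltac:(lia)).
    rewrite <- (Rmult_1_r (gauss_seq x (S k))) at 1. apply Rmult_le_compat_l; lra. }
  assert (Hb : has_ub v).
  { exists (gauss_seq x 1 * exp (x * (1 + x))). intros y [k ->]. unfold v.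
    assert (T := tele_up (gauss_seq x) (x * (1 + x))).
    eapply Rle_trans. apply T. 2: lia.
    intros m Hm. rewrite gauss_S by auto. apply Rmult_le_compat_l. left; apply gauss_pos; auto.
    apply gauss_ratio_up; auto.
    apply Rmult_le_compat_l. left; apply gauss_pos; auto. apply exp_le.
    pose proof (INRpos (S k) ltac:(lia)).
    assert (0 < / INR (S k)) by (apply Rinv_0_lt_compat; lra).
    assert (0 < x * (1 + x)) by nra. nra. }
  destruct (growing_cv v Hg Hb) as [l Hl]. exists l. split.
  - apply Un_cv_shift. exact Hl.
  - pose proof (growing_ineq v l Hg Hl 0%nat). unfold v in H. pose proof (gauss_pos x 1 Hx). lra.
Qed.

Lemma Gamma_eq (x l : R) : Un_cv (gauss_seq x) l -> Gamma x = l.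
Proof.
  intros H. unfold Gamma. apply UL_sequence with (gauss_seq x); auto.
  apply epsilon_spec. exists l; auto.
Qed.

Lemma Gamma_pos (x : R) : 0 < x -> 0 < Gamma x /\ Un_cv (gauss_seq x) (Gamma x).
Proof. intros Hx. destruct (gauss_cv x Hx) as [l [H1 H2]]. rewrite (Gamma_eq x l H1). auto. Qed.

Lemma cv_by_rate (u : nat -> R) (l C : R) :
  (forall m, (1 <= m)%nat -> Rabs (u m - l) <= C / INR m) -> Un_cv u l.
Proof.
  intros H eps He.
  destruct (INR_archimed eps (Rabs C) He) as [N HN].
  exists (S N). intros n Hn. unfold Rdist. eapply Rle_lt_trans. apply H. lia.
  assert (HnN : INR (S N) <= INR n) by (apply le_INR; lia).
  pose proof (pos_INR N). rewrite S_INR in HnN.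
  apply (Rmult_lt_reg_r (INR n)). lra. unfold Rdiv. rewrite Rmult_assoc, Rinv_l by lra.
  pose proof (Rle_abs C).
  assert (eps * INR N <= eps * INR n) by (apply Rmult_le_compat_l; lra). lra.
Qed.

Lemma cv_eventually (u v : nat -> R) (l : R) :
  (forall m, (1 <= m)%nat -> u m = v m) -> Un_cv v l -> Un_cv u l.
Proof.
  intros E H eps He. destruct (H eps He) as [N HN]. exists (S N). intros n Hn.
  rewrite E by lia. apply HN; lia.
Qed.

Lemma prod_shift (x : R) (m : nat) :
  prod_f_R0 (fun k => x + 1 + INR k) m * x = prod_f_R0 (fun k => x + INR k) m * (x + INR m + 1).
Proof.
  induction m. simpl. ring.
  rewrite !prod_S. rewrite S_INR.
  replace (prod_f_R0 (fun k : nat => x + 1 + INR k) m * (x + 1 + (INR m + 1)) * x)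
    with (prod_f_R0 (fun k : nat => x + 1 + INR k) m * x * (x + 1 + (INR m + 1))) by ring.
  rewrite IHm. ring.
Qed.

Lemma prod_nz (x : R) (m : nat) : -1 < x -> x <> 0 -> prod_f_R0 (fun k => x + INR k) m <> 0.
Proof.
  intros H1 H2. induction m. simpl. lra. rewrite prod_S. apply Rmult_integral_contrapositive. split; auto.
  rewrite S_INR. pose proof (pos_INR m). lra.
Qed.

Lemma gauss_shift (x : R) (m : nat) : -1 < x -> x <> 0 -> (1 <= m)%nat ->
  gauss_seq x m = gauss_seq (x + 1) m * ((x + INR m + 1) / (INR m * x)).
Proof.
  intros H1 H2 Hm. pose proof (INRpos m Hm). unfold gauss_seq, Rpower.
  rewrite Rmult_plus_distr_r, Rmult_1_l, exp_plus, exp_ln by lra.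
  pose proof (prod_nz x m H1 H2).
  assert (prod_f_R0 (fun k => x + 1 + INR k) m = prod_f_R0 (fun k => x + INR k) m * (x + INR m + 1) / x) as ->.
  { rewrite <- prod_shift. field. auto. }
  field. repeat split; try lra. 
Qed.

Lemma Gamma_FE (x : R) : -1 < x -> x <> 0 -> Gamma (x + 1) = x * Gamma x /\ Un_cv (gauss_seq x) (Gamma x).
Proof.
  intros H1 H2. destruct (Gamma_pos (x + 1) ltac:(lra)) as [P C].
  assert (Cx : Un_cv (gauss_seq x) (Gamma (x + 1) * / x)).
  { apply cv_eventually with (fun m => gauss_seq (x + 1) m * ((x + INR m + 1) / (INR m * x))).
    intros; apply gauss_shift; auto.
    apply CV_mult; auto. apply cv_by_rate with (C := Rabs ((x + 1) / x)).
    intros m Hm. pose proof (INRpos m Hm).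
    replace ((x + INR m + 1) / (INR m * x) - / x) with (((x + 1) / x) / INR m) by (field; lra).
    unfold Rdiv at 1. rewrite Rabs_mult, Rabs_inv, (Rabs_right (INR m)) by lra. right; reflexivity. }
  rewrite (Gamma_eq x _ Cx). split. field. auto. auto.
Qed.

Lemma prod_fact (m : nat) : prod_f_R0 (fun k => 1 + INR k) m = INR (fact (S m)).
Proof.
  induction m. simpl. lra. rewrite prod_S, IHm. rewrite (fact_simpl (S m)), mult_INR.
  rewrite (S_INR (S m)). ring.
Qed.

Lemma Gamma_1 : Gamma 1 = 1.
Proof.
  apply Gamma_eq. apply cv_by_rate with (C := 1). intros m Hm.
  pose proof (INRpos m Hm). unfold gauss_seq. rewrite prod_fact, Rpower_1 by lra.
  rewrite fact_simpl, mult_INR, S_INR.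
  pose proof (INRpos (fact m) ltac:(pose proof (lt_O_fact m); lia)).
  replace (INR (fact m) * INR m / ((INR m + 1) * INR (fact m)) - 1) with (- / (INR m + 1)) by (field; lra).
  rewrite Rabs_Ropp, Rabs_right. unfold Rdiv. rewrite Rmult_1_l. apply Rinv_le_contravar; lra.
  left; apply Rinv_0_lt_compat; lra.
Qed.

Fixpoint rprod (f : nat -> R) (k : nat) : R :=
  match k with O => 1 | S k' => rprod f k' * f k' end.

Lemma Gamma_add_nat (x : R) (k : nat) : 0 < x -> Gamma (x + INR k) = Gamma x * rprod (fun j => x + INR j) k.
Proof.
  intros Hx. induction k. simpl. rewrite Rplus_0_r; ring.
  simpl rprod. rewrite S_INR. replace (x + (INR k + 1)) with ((x + INR k) + 1) by ring.
  pose proof (pos_INR k).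
  destruct (Gamma_FE (x + INR k)) as [E _]; try lra. rewrite E, IHk. ring.
Qed.

Lemma Gamma_nat (k : nat) : Gamma (INR k + 1) = INR (fact k).
Proof.
  induction k. simpl. rewrite Rplus_0_l. apply Gamma_1.
  rewrite S_INR. destruct (Gamma_FE (INR k + 1)) as [E _]. pose proof (pos_INR k); lra. pose proof (pos_INR k); lra.
  rewrite E, IHk, fact_simpl, mult_INR, S_INR. ring.
Qed.

Section Geg.
Variable a : R.
Hypothesis Ha : -1/2 < a.

Lemma Gcoef_0 k : Gcoef a 0 k = if Nat.eqb k 0 then 1 else 0.
Proof. reflexivity. Qed.
Lemma Gcoef_1 k : Gcoef a 1 k = if Nat.eqb k 1 then 1 else 0.
Proof. reflexivity. Qed.

Lemma Gpair_fst m : fst (Gpair a (S m)) = snd (Gpair a m).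
Proof. simpl. destruct (Gpair a m); reflexivity. Qed.
Lemma Gpair_snd m k : snd (Gpair a (S m)) k =
  (2 * (INR m + 1 + a) * (match k with O => 0 | S k' => snd (Gpair a m) k' end)
   - (INR m + 1) * fst (Gpair a m) k) / (INR m + 1 + 2 * a).
Proof. simpl. destruct (Gpair a m); reflexivity. Qed.

Lemma Gcoef_SS m k : Gcoef a (S (S m)) k =
  (2 * (INR m + 1 + a) * (match k with O => 0 | S k' => Gcoef a (S m) k' end)
   - (INR m + 1) * Gcoef a m k) / (INR m + 1 + 2 * a).
Proof. unfold Gcoef. rewrite Gpair_fst, Gpair_snd, Gpair_fst. reflexivity. Qed.

Lemma Gcoef_zero_aux m : (forall k, (m < k)%nat -> Gcoef a m k = 0) /\
                         (forall k, (S m < k)%nat -> Gcoef a (S m) k = 0).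
Proof.
  induction m as [|m [IH1 IH2]].
  - split; intros k Hk; [rewrite Gcoef_0 | rewrite Gcoef_1];
    destruct (Nat.eqb_spec k 0); destruct (Nat.eqb_spec k 1); try lia; reflexivity.
  - split; auto. intros k Hk. rewrite Gcoef_SS. destruct k. lia.
    rewrite IH2 by lia. rewrite IH1 by lia. unfold Rdiv; ring.
Qed.

Lemma Gcoef_zero m k : (m < k)%nat -> Gcoef a m k = 0.
Proof. apply Gcoef_zero_aux. Qed.

Lemma sum_ext_zero (c : nat -> R) (x : R) (N M : nat) :
  (forall k, (N < k)%nat -> c k = 0) -> (N <= M)%nat ->
  sum_f_R0 (fun k => c k * x ^ k) M = sum_f_R0 (fun k => c k * x ^ k) N.
Proof.
  intros Hc HNM. induction HNM. reflexivity.
  simpl. rewrite IHHNM, Hc by lia. ring.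
Qed.

Lemma sum_lin (s t : nat -> R) (al be d : R) (M : nat) :
  sum_f_R0 (fun k => (al * s k - be * t k) / d) M =
  (al * sum_f_R0 s M - be * sum_f_R0 t M) / d.
Proof. induction M; simpl. reflexivity. rewrite IHM. unfold Rdiv; ring. Qed.

Lemma sum_shift (c : nat -> R) (x : R) (M : nat) :
  sum_f_R0 (fun k => (match k with O => 0 | S k' => c k' end) * x ^ k) (S M) =
  x * sum_f_R0 (fun k => c k * x ^ k) M.
Proof.
  induction M. simpl. ring.
  rewrite tech5, IHM. simpl. ring.
Qed.

Lemma Geg_0 x : Geg a 0 x = 1.
Proof. unfold Geg. simpl. rewrite Gcoef_0. simpl. ring. Qed.
Lemma Geg_1 x : Geg a 1 x = x.
Proof. unfold Geg. simpl. rewrite !Gcoef_1. simpl. ring. Qed.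

Lemma Geg_rec m x : Geg a (S (S m)) x =
  (2 * (INR m + 1 + a) * x * Geg a (S m) x - (INR m + 1) * Geg a m x) / (INR m + 1 + 2 * a).
Proof.
  unfold Geg at 1.
  transitivity (sum_f_R0 (fun k => (2 * (INR m + 1 + a) * ((match k with O => 0 | S k' => Gcoef a (S m) k' end) * x ^ k)
     - (INR m + 1) * (Gcoef a m k * x ^ k)) / (INR m + 1 + 2 * a)) (S (S m))).
  { apply sum_eq. intros i _. rewrite Gcoef_SS. unfold Rdiv; ring. }
  rewrite sum_lin. rewrite sum_shift.
  rewrite (sum_ext_zero (Gcoef a m) x m (S (S m))) by (auto using Gcoef_zero).
  unfold Geg. unfold Rdiv; ring.
Qed.

Lemma den_pos m : 0 < INR m + 1 + 2 * a.
Proof. pose proof (pos_INR m); lra. Qed.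

Lemma Geg_at1 m : Geg a m 1 = 1 /\ Geg a (S m) 1 = 1.
Proof.
  induction m as [|m [IH1 IH2]]. rewrite Geg_0, Geg_1; auto.
  split; auto. rewrite Geg_rec, IH1, IH2. pose proof (den_pos m). field. lra.
Qed.

Lemma Geg_par m x : Geg a m (- x) = (-1) ^ m * Geg a m x /\ Geg a (S m) (- x) = (-1) ^ (S m) * Geg a (S m) x.
Proof.
  induction m as [|m [IH1 IH2]]. rewrite !Geg_0, !Geg_1. simpl; split; ring.
  split; auto. rewrite !Geg_rec, IH1, IH2. simpl. pose proof (den_pos m). field. lra.
Qed.

Lemma Geg_ge1 m x : 1 <= x -> 1 <= Geg a m x <= Geg a (S m) x.
Proof.
  intros Hx. induction m as [|m IH]. rewrite Geg_0, Geg_1; lra.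
  destruct IH as [I1 I2]. split. lra.
  rewrite Geg_rec. pose proof (den_pos m). pose proof (pos_INR m).
  apply (Rmult_le_reg_r (INR m + 1 + 2 * a)); auto.
  unfold Rdiv. rewrite Rmult_assoc, Rinv_l, Rmult_1_r by lra.
  assert (0 < INR m + 1 + a) by lra.
  assert (2 * (INR m + 1 + a) * Geg a (S m) x <= 2 * (INR m + 1 + a) * x * Geg a (S m) x).
  { rewrite (Rmult_assoc _ x). apply Rmult_le_compat_l. lra.
    rewrite <- (Rmult_1_l (Geg a (S m) x)) at 1. apply Rmult_le_compat_r; lra. }
  assert ((INR m + 1) * Geg a m x <= (INR m + 1) * Geg a (S m) x) by (apply Rmult_le_compat_l; lra).
  nra.
Qed.

Lemma Geg_zero_in m x : Geg a (S m) x = 0 -> -1 < x < 1.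
Proof.
  intros H. split.
  - destruct (Rlt_dec (-1) x) as [h|h]; auto. exfalso.
    destruct (Geg_par m (- x)) as [_ P]. rewrite Ropp_involutive, H in P.
    destruct (Geg_ge1 (S m) (- x)) as [Q _]. lra.
    assert (((-1) ^ S m) <> 0) by (apply pow_nonzero; lra).
    symmetry in P. apply Rmult_integral in P. destruct P; lra.
  - destruct (Rlt_dec x 1) as [h|h]; auto. exfalso.
    destruct (Geg_ge1 (S m) x) as [Q _]. lra. lra.
Qed.
End Geg.

Fixpoint Dp (a x : R) (m : nat) : R * R :=
  match m with
  | O => (0, 1)
  | S m' => let (p, q) := Dp a x m' in
      (q, (2 * (INR m' + 1 + a) * (Geg a (S m') x + x * q) - (INR m' + 1) * p) / (INR m' + 1 + 2 * a))
  end.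
Definition Dg a m x := fst (Dp a x m).

Fixpoint D2p (a x : R) (m : nat) : R * R :=
  match m with
  | O => (0, 0)
  | S m' => let (p, q) := D2p a x m' in
      (q, (2 * (INR m' + 1 + a) * (2 * Dg a (S m') x + x * q) - (INR m' + 1) * p) / (INR m' + 1 + 2 * a))
  end.
Definition D2g a m x := fst (D2p a x m).

Lemma Dg_0 a x : Dg a 0 x = 0. Proof. reflexivity. Qed.
Lemma Dg_1 a x : Dg a 1 x = 1. Proof. reflexivity. Qed.
Lemma Dg_SS a m x : Dg a (S (S m)) x =
  (2 * (INR m + 1 + a) * (Geg a (S m) x + x * Dg a (S m) x) - (INR m + 1) * Dg a m x) / (INR m + 1 + 2 * a).
Proof. unfold Dg. simpl. destruct (Dp a x m). reflexivity. Qed.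
Lemma D2g_0 a x : D2g a 0 x = 0. Proof. reflexivity. Qed.
Lemma D2g_1 a x : D2g a 1 x = 0. Proof. reflexivity. Qed.
Lemma D2g_SS a m x : D2g a (S (S m)) x =
  (2 * (INR m + 1 + a) * (2 * Dg a (S m) x + x * D2g a (S m) x) - (INR m + 1) * D2g a m x) / (INR m + 1 + 2 * a).
Proof. unfold D2g. simpl. destruct (D2p a x m). reflexivity. Qed.

Lemma der_rec (f g : R -> R) (df dg c1 c2 d x : R) :
  is_derive f x df -> is_derive g x dg ->
  is_derive (fun t => (c1 * t * f t - c2 * g t) / d) x ((c1 * (f x + x * df) - c2 * dg) / d).
Proof.
  intros Hf Hg. apply is_derive_Reals in Hf. apply is_derive_Reals in Hg.
  apply (is_derive_ext (minus_fct (mult_real_fct (c1 / d) (mult_fct id f)) (mult_real_fct (c2 / d) g))).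
  { intros t. simpl. unfold minus_fct, mult_real_fct, mult_fct, id. unfold Rdiv. ring. }
  replace ((c1 * (f x + x * df) - c2 * dg) / d) with (c1 / d * (1 * f x + id x * df) - c2 / d * dg) by (unfold id, Rdiv; ring).
  apply is_derive_Reals.
  apply derivable_pt_lim_minus; apply derivable_pt_lim_scal; auto.
  apply derivable_pt_lim_mult; auto. apply derivable_pt_lim_id.
Qed.

Lemma der_rec2 (f g h : R -> R) (df dg dh c1 c2 d x : R) :
  is_derive f x df -> is_derive g x dg -> is_derive h x dh ->
  is_derive (fun t => (c1 * (h t + t * f t) - c2 * g t) / d) x ((c1 * (dh + (f x + x * df)) - c2 * dg) / d).
Proof.
  intros Hf Hg Hh. apply is_derive_Reals in Hf. apply is_derive_Reals in Hg. apply is_derive_Reals in Hh.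
  apply (is_derive_ext (minus_fct (mult_real_fct (c1 / d) (plus_fct h (mult_fct id f))) (mult_real_fct (c2 / d) g))).
  { intros t. simpl. unfold minus_fct, plus_fct, mult_real_fct, mult_fct, id. unfold Rdiv. ring. }
  replace ((c1 * (dh + (f x + x * df)) - c2 * dg) / d) with (c1 / d * (dh + (1 * f x + id x * df)) - c2 / d * dg) by (unfold id, Rdiv; ring).
  apply is_derive_Reals.
  apply derivable_pt_lim_minus; apply derivable_pt_lim_scal; auto.
  apply derivable_pt_lim_plus; auto.
  apply derivable_pt_lim_mult; auto. apply derivable_pt_lim_id.
Qed.

Lemma Geg_der a m x : is_derive (Geg a m) x (Dg a m x) /\ is_derive (Geg a (S m)) x (Dg a (S m) x).
Proof.
  revert x. induction m as [|m IH]; intros x.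
  - split. apply (is_derive_ext (fun _ => 1)). intros; rewrite Geg_0; auto. rewrite Dg_0. apply is_derive_Reals, derivable_pt_lim_const.
    apply (is_derive_ext (fun t => t)). intros; rewrite Geg_1; auto. rewrite Dg_1. apply is_derive_Reals, derivable_pt_lim_id.
  - split. apply IH.
    apply (is_derive_ext (fun t => (2 * (INR m + 1 + a) * t * Geg a (S m) t - (INR m + 1) * Geg a m t) / (INR m + 1 + 2 * a))).
    intros; rewrite Geg_rec; auto. rewrite Dg_SS.
    apply der_rec; apply IH.
Qed.

Lemma Dg_der a m x : is_derive (Dg a m) x (D2g a m x) /\ is_derive (Dg a (S m)) x (D2g a (S m) x).
Proof.
  revert x. induction m as [|m IH]; intros x.
  - split. apply (is_derive_ext (fun _ => 0)). intros; rewrite Dg_0; auto. rewrite D2g_0. apply is_derive_Reals, derivable_pt_lim_const.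
    apply (is_derive_ext (fun _ => 1)). intros; rewrite Dg_1; auto. rewrite D2g_1. apply is_derive_Reals, derivable_pt_lim_const.
  - split. apply IH.
    apply (is_derive_ext (fun t => (2 * (INR m + 1 + a) * (Geg a (S m) t + t * Dg a (S m) t) - (INR m + 1) * Dg a m t) / (INR m + 1 + 2 * a))).
    intros; rewrite Dg_SS; auto. rewrite D2g_SS.
    replace (2 * Dg a (S m) x + x * D2g a (S m) x) with (Dg a (S m) x + (Dg a (S m) x + x * D2g a (S m) x)) by ring.
    apply der_rec2. apply IH. apply IH. apply Geg_der.
Qed.

Section P.
Variable a : R.
Hypothesis Ha : -1/2 < a.

Lemma PN_aux m x :
  (1 - x ^ 2) * Dg a (S m) x = INR (S m) * (Geg a m x - x * Geg a (S m) x) /\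
  (1 - x ^ 2) * Dg a (S (S m)) x = INR (S (S m)) * (Geg a (S m) x - x * Geg a (S (S m)) x).
Proof.
  induction m as [|m [H1 H2]].
  - rewrite Dg_1, Dg_SS, Dg_1, Dg_0, Geg_rec, Geg_1, Geg_0. simpl INR. pose proof (den_pos a Ha 0).
    simpl INR in H. split. field. field. lra.
  - split; auto.
    pose proof (den_pos a Ha m) as Q0. pose proof (den_pos a Ha (S m)) as Q1.
    rewrite (Dg_SS a (S m)). rewrite (Geg_rec a (S m)).
    set (d1 := Dg a (S m) x) in *. set (d2 := Dg a (S (S m)) x) in *.
    replace ((1 - x ^ 2) * ((2 * (INR (S m) + 1 + a) * (Geg a (S (S m)) x + x * d2) - (INR (S m) + 1) * d1) / (INR (S m) + 1 + 2 * a)))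
      with ((2 * (INR (S m) + 1 + a) * ((1 - x ^ 2) * Geg a (S (S m)) x + x * ((1 - x ^ 2) * d2)) - (INR (S m) + 1) * ((1 - x ^ 2) * d1)) / (INR (S m) + 1 + 2 * a))
      by (field; lra).
    rewrite H1, H2. rewrite !(Geg_rec a m).
    rewrite !S_INR in *. field. lra.
Qed.

Lemma PN m x : (1 - x ^ 2) * Dg a (S m) x = INR (S m) * (Geg a m x - x * Geg a (S m) x).
Proof. apply PN_aux. Qed.

Lemma QN m x : (1 - x ^ 2) * Dg a m x = (INR m + 2 * a) * (x * Geg a m x - Geg a (S m) x).
Proof.
  destruct m. rewrite Dg_0, Geg_0, Geg_1. simpl. ring.
  rewrite PN. rewrite Geg_rec. pose proof (den_pos a Ha m). rewrite S_INR. field. lra.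
Qed.

Lemma ODE m x : x ^ 2 <> 1 ->
  (1 - x ^ 2) * D2g a (S m) x = (2 * a + 1) * x * Dg a (S m) x - INR (S m) * (INR (S m) + 2 * a) * Geg a (S m) x.
Proof.
  intros Hx.
  assert (E : -2 * x * Dg a (S m) x + (1 - x ^ 2) * D2g a (S m) x =
              INR (S m) * (Dg a m x - (Geg a (S m) x + x * Dg a (S m) x))).
  { assert (L : is_derive (fun t => (1 - t ^ 2) * Dg a (S m) t) x (-2 * x * Dg a (S m) x + (1 - x ^ 2) * D2g a (S m) x)).
    { apply (is_derive_ext (mult_fct (fun t => 1 - t ^ 2) (Dg a (S m)))). intros t; reflexivity.
      apply is_derive_Reals. replace (-2 * x * Dg a (S m) x + (1 - x ^ 2) * D2g a (S m) x)
        with ((- (INR 2 * x ^ 1)) * Dg a (S m) x + (1 - x ^ 2) * D2g a (S m) x) by (simpl; ring).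
      apply (derivable_pt_lim_mult (fun t => 1 - t ^ 2) (Dg a (S m))).
      replace (- (INR 2 * x ^ 1)) with (0 - INR 2 * x ^ 1) by ring.
      apply (derivable_pt_lim_minus (fun _ => 1) (fun t => t ^ 2)). apply derivable_pt_lim_const. apply derivable_pt_lim_pow.
      apply is_derive_Reals. apply Dg_der. }
    assert (R : is_derive (fun t => INR (S m) * (Geg a m t - t * Geg a (S m) t)) x
                 (INR (S m) * (Dg a m x - (Geg a (S m) x + x * Dg a (S m) x)))).
    { apply (is_derive_ext (mult_real_fct (INR (S m)) (minus_fct (Geg a m) (mult_fct id (Geg a (S m)))))).
      intros t; reflexivity.
      apply is_derive_Reals. replace (Geg a (S m) x + x * Dg a (S m) x) with (1 * Geg a (S m) x + id x * Dg a (S m) x) by (unfold id; ring).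
      apply derivable_pt_lim_scal, derivable_pt_lim_minus. apply is_derive_Reals, Geg_der.
      apply derivable_pt_lim_mult. apply derivable_pt_lim_id. apply is_derive_Reals, Geg_der. }
    apply is_derive_unique in L. apply is_derive_unique in R.
    rewrite <- L, <- R. apply Derive_ext. intros t. apply PN. }
  assert (Hx' : 1 - x ^ 2 <> 0) by lra.
  apply (Rmult_eq_reg_l (1 - x ^ 2)); auto.
  rewrite Rmult_comm at 1.
  replace ((1 - x ^ 2) * D2g a (S m) x * (1 - x ^ 2)) with
    ((1 - x ^ 2) * (-2 * x * Dg a (S m) x + (1 - x ^ 2) * D2g a (S m) x) + 2 * x * ((1 - x ^ 2) * Dg a (S m) x)) by ring.
  rewrite E.
  replace ((1 - x ^ 2) * (INR (S m) * (Dg a m x - (Geg a (S m) x + x * Dg a (S m) x))) + 2 * x * ((1 - x ^ 2) * Dg a (S m) x))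
    with (INR (S m) * ((1 - x ^ 2) * Dg a m x - (1 - x ^ 2) * Geg a (S m) x - x * ((1 - x ^ 2) * Dg a (S m) x)) + 2 * x * ((1 - x ^ 2) * Dg a (S m) x)) by ring.
  replace ((1 - x ^ 2) * ((2 * a + 1) * x * Dg a (S m) x - INR (S m) * (INR (S m) + 2 * a) * Geg a (S m) x))
    with ((2 * a + 1) * x * ((1 - x ^ 2) * Dg a (S m) x) - (1 - x ^ 2) * (INR (S m) * (INR (S m) + 2 * a) * Geg a (S m) x)) by ring.
  rewrite QN, PN. rewrite S_INR. ring.
Qed.
End P.

Section Son.
Variable a : R.
Hypothesis Ha : -1/2 < a.
Variable m : nat.

Let N := S m.
Let c := INR N * (INR N + 2 * a).
Lemma c_pos : 0 < c.
Proof. unfold c, N. rewrite S_INR. pose proof (pos_INR m). apply Rmult_lt_0_compat; lra. Qed.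

Definition sonf (t : R) := Geg a N t ^ 2 + (1 - t ^ 2) * Dg a N t ^ 2 / c.
Definition sond (t : R) := 2 * Geg a N t * Dg a N t +
   (-2 * t * Dg a N t ^ 2 + (1 - t ^ 2) * (2 * Dg a N t * D2g a N t)) / c.

Lemma son_der t : derivable_pt_lim sonf t (sond t).
Proof.
  apply is_derive_Reals.
  apply (is_derive_ext (plus_fct (mult_fct (Geg a N) (Geg a N))
     (mult_real_fct (/ c) (mult_fct (fun t => 1 - t ^ 2) (mult_fct (Dg a N) (Dg a N)))))).
  { intros s. simpl. unfold sonf, plus_fct, mult_fct, mult_real_fct. unfold Rdiv. ring. }
  apply is_derive_Reals.
  replace (sond t) with
    ((Dg a N t * Geg a N t + Geg a N t * Dg a N t) +
     / c * ((0 - INR 2 * t ^ 1) * (Dg a N t * Dg a N t) + (1 - t ^ 2) * (D2g a N t * Dg a N t + Dg a N t * D2g a N t)))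
    by (unfold sond; simpl; unfold Rdiv; ring).
  apply derivable_pt_lim_plus.
  - apply derivable_pt_lim_mult; apply is_derive_Reals, Geg_der.
  - apply derivable_pt_lim_scal.
    apply (derivable_pt_lim_mult (fun t => 1 - t ^ 2) (mult_fct (Dg a N) (Dg a N))).
    apply (derivable_pt_lim_minus (fun _ => 1) (fun t => t ^ 2)). apply derivable_pt_lim_const. apply derivable_pt_lim_pow.
    apply derivable_pt_lim_mult; apply is_derive_Reals, Dg_der.
Qed.

Lemma sond_eq t : -1 < t < 1 -> sond t = 4 * a * t * Dg a N t ^ 2 / c.
Proof.
  intros Ht. pose proof c_pos.
  assert (Ht2 : t ^ 2 < 1) by (simpl; rewrite Rmult_1_r; assert (0 < (1 - t) * (1 + t)) by (apply Rmult_lt_0_compat; lra); nra). assert (E := ODE a Ha m t ltac:(lra)). fold N in E.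
  unfold sond.
  replace ((1 - t ^ 2) * (2 * Dg a N t * D2g a N t)) with (2 * Dg a N t * ((1 - t ^ 2) * D2g a N t)) by ring.
  rewrite E. unfold c. field. unfold N; rewrite S_INR; pose proof (pos_INR m); split; lra.
Qed.



Lemma sonf_ge t : -1 <= t <= 1 -> Geg a N t ^ 2 <= sonf t.
Proof.
  intros Ht. unfold sonf. pose proof c_pos. 
  assert (0 <= (1 - t ^ 2) * Dg a N t ^ 2 / c).
  { unfold Rdiv. apply Rmult_le_pos. apply Rmult_le_pos. nra. apply pow2_ge_0. left; apply Rinv_0_lt_compat; auto. }
  lra.
Qed.

Lemma sonf_1 : sonf 1 = 1.
Proof. unfold sonf. destruct (Geg_at1 a Ha m) as [_ E]. fold N in E. rewrite E. unfold Rdiv; ring. Qed.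

Lemma sonf_m1 : sonf (-1) = 1.
Proof.
  unfold sonf. destruct (Geg_par a Ha m 1) as [_ E]. fold N in E. replace (-1) with (- (1)) at 1 3 by ring. rewrite E.
  destruct (Geg_at1 a Ha m) as [_ E1]. fold N in E1. rewrite E1.
  rewrite Rmult_1_r. replace (((-1) ^ N) ^ 2) with 1. unfold Rdiv; ring.
  rewrite <- pow_mult, Nat.mul_comm, pow_mult. replace ((-1) ^ 2) with 1 by ring. rewrite pow1; auto.
Qed.

Lemma son_pos t : 0 <= a -> -1 <= t <= 1 -> Geg a N t ^ 2 <= 1.
Proof.
  intros Ha0 Ht. eapply Rle_trans. apply sonf_ge; auto. pose proof c_pos.
  destruct (Rle_dec 0 t).
  - destruct (Req_dec t 1). subst. rewrite sonf_1; lra.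
    destruct (MVT_cor2 sonf sond t 1) as [z [Ez Hz]]. lra. intros; apply son_der.
    rewrite sond_eq in Ez by lra. rewrite sonf_1 in Ez.
    assert (0 <= 4 * a * z * Dg a N z ^ 2 / c * (1 - t)).
    { apply Rmult_le_pos. unfold Rdiv. apply Rmult_le_pos. apply Rmult_le_pos. apply Rmult_le_pos; lra. apply pow2_ge_0.
      left; apply Rinv_0_lt_compat; auto. lra. }
    lra.
  - destruct (Req_dec t (-1)). subst. rewrite sonf_m1; lra.
    destruct (MVT_cor2 sonf sond (-1) t) as [z [Ez Hz]]. lra. intros; apply son_der.
    rewrite sond_eq in Ez by lra. rewrite sonf_m1 in Ez.
    assert (4 * a * z * Dg a N z ^ 2 / c * (t - -1) <= 0).
    { replace (4 * a * z * Dg a N z ^ 2 / c * (t - -1)) with (- ((4 * a * (- z) * Dg a N z ^ 2 / c) * (t + 1))) by (unfold Rdiv; ring).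
      rewrite <- Ropp_0; apply Ropp_le_contravar.
      apply Rmult_le_pos. unfold Rdiv. apply Rmult_le_pos. apply Rmult_le_pos. nra. apply pow2_ge_0.
      left; apply Rinv_0_lt_compat; auto. lra. }
    lra.
Qed.

Lemma son_neg t : a < 0 -> -1 <= t <= 1 -> Geg a N t ^ 2 <= sonf 0.
Proof.
  intros Ha0 Ht. eapply Rle_trans. apply sonf_ge; auto. pose proof c_pos.
  destruct (Rle_dec 0 t).
  - destruct (Req_dec t 0). subst. lra.
    destruct (MVT_cor2 sonf sond 0 t) as [z [Ez Hz]]. lra. intros; apply son_der.
    rewrite sond_eq in Ez by lra.
    assert (4 * a * z * Dg a N z ^ 2 / c * (t - 0) <= 0).
    { replace (4 * a * z * Dg a N z ^ 2 / c * (t - 0)) with (- ((4 * (- a) * z * Dg a N z ^ 2 / c) * t)) by (unfold Rdiv; ring).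
      rewrite <- Ropp_0; apply Ropp_le_contravar.
      apply Rmult_le_pos. unfold Rdiv. apply Rmult_le_pos. apply Rmult_le_pos. nra. apply pow2_ge_0.
      left; apply Rinv_0_lt_compat; auto. lra. }
    lra.
  - destruct (MVT_cor2 sonf sond t 0) as [z [Ez Hz]]. lra. intros; apply son_der.
    rewrite sond_eq in Ez by lra.
    assert (0 <= 4 * a * z * Dg a N z ^ 2 / c * (0 - t)).
    { replace (4 * a * z * Dg a N z ^ 2 / c * (0 - t)) with ((4 * (- a) * (- z) * Dg a N z ^ 2 / c) * (- t)) by (unfold Rdiv; ring).
      apply Rmult_le_pos. unfold Rdiv. apply Rmult_le_pos. apply Rmult_le_pos. nra. apply pow2_ge_0.
      left; apply Rinv_0_lt_compat; auto. lra. }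
    lra.
Qed.

Lemma sonf0_ge1 : a < 0 -> 1 <= sonf 0.
Proof.
  intros Ha0. pose proof (son_neg (-1) Ha0 ltac:(lra)).
  destruct (Geg_par a Ha m 1) as [_ E]. fold N in E. replace (-1) with (- (1)) in H by ring. rewrite E in H.
  destruct (Geg_at1 a Ha m) as [_ E1]. fold N in E1. rewrite E1 in H.
  rewrite Rmult_1_r in H. replace (((-1) ^ N) ^ 2) with 1 in H. auto.
  rewrite <- pow_mult, Nat.mul_comm, pow_mult. replace ((-1) ^ 2) with 1 by ring. rewrite pow1; auto.
Qed.

Lemma sonf0 : sonf 0 = Geg a N 0 ^ 2 + Dg a N 0 ^ 2 / c.
Proof. unfold sonf. unfold Rdiv. ring. Qed.
End Son.

Lemma Rint_spec (g : R -> R) lo hi (pr : Riemann_integrable g lo hi) : Rint g lo hi = RiemannInt pr.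
Proof.
  unfold Rint. assert (H : exists I, exists pr : Riemann_integrable g lo hi, RiemannInt pr = I).
  { exists (RiemannInt pr). exists pr. reflexivity. }
  destruct (epsilon_spec (inhabits 0) _ H) as [pr' E]. rewrite <- E. apply RiemannInt_P5.
Qed.

Lemma Geg_cont a m t : continuity_pt (Geg a m) t.
Proof.
  apply derivable_continuous_pt. exists (Dg a m t). apply is_derive_Reals. apply Geg_der.
Qed.

Lemma int_bound (g : R -> R) lo hi M (pr : Riemann_integrable g lo hi) :
  lo <= hi -> (forall t, lo < t < hi -> - M <= g t <= M) ->
  - (M * (hi - lo)) <= RiemannInt pr <= M * (hi - lo).
Proof.
  intros Hlh H. split.
  - replace (- (M * (hi - lo))) with (- M * (hi - lo)) by ring.
    rewrite <- (RiemannInt_P15 (RiemannInt_P14 lo hi (- M))).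
    apply RiemannInt_P19; auto. intros t Ht. unfold fct_cte. apply H; auto.
  - rewrite <- (RiemannInt_P15 (RiemannInt_P14 lo hi M)).
    apply RiemannInt_P19; auto. intros t Ht. unfold fct_cte. apply H; auto.
Qed.

Lemma int_G_bound a m x M : -1 <= x -> 0 <= M ->
  (forall t, -1 <= t <= x -> Geg a (S m) t ^ 2 <= M ^ 2) ->
  Rabs (Rint (Geg a (S m)) (-1) x) <= (x + 1) * M.
Proof.
  intros Hx HM H.
  assert (pr : Riemann_integrable (Geg a (S m)) (-1) x).
  { apply continuity_implies_RiemannInt; auto. intros; apply Geg_cont. }
  rewrite (Rint_spec _ _ _ pr).
  destruct (int_bound _ _ _ M pr Hx) as [L U].
  { intros t Ht. specialize (H t ltac:(lra)). simpl in H. nra. }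
  apply Rabs_le. lra.
Qed.

Lemma int_G_strict a m x M : -1 < x -> 0 < M -> Geg a (S m) x = 0 ->
  (forall t, -1 <= t <= x -> Geg a (S m) t ^ 2 <= M ^ 2) ->
  Rabs (Rint (Geg a (S m)) (-1) x) < (x + 1) * M.
Proof.
  intros Hx HM H0 H.
  destruct (Geg_cont a (S m) x (M / 2) ltac:(lra)) as [del [Hdel Hc]].
  set (d := Rmin (del / 2) (x + 1)).
  assert (Hd : 0 < d) by (unfold d; apply Rmin_glb_lt; lra).
  assert (Hd1 : d <= del / 2) by apply Rmin_l.
  assert (Hd2 : d <= x + 1) by apply Rmin_r.
  assert (pr1 : Riemann_integrable (Geg a (S m)) (-1) (x - d)).
  { apply continuity_implies_RiemannInt. lra. intros; apply Geg_cont. }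
  assert (pr2 : Riemann_integrable (Geg a (S m)) (x - d) x).
  { apply continuity_implies_RiemannInt. lra. intros; apply Geg_cont. }
  assert (pr : Riemann_integrable (Geg a (S m)) (-1) x).
  { apply continuity_implies_RiemannInt. lra. intros; apply Geg_cont. }
  rewrite (Rint_spec _ _ _ pr). rewrite <- (RiemannInt_P26 pr1 pr2 pr).
  destruct (int_bound _ _ _ M pr1) as [L1 U1]. lra.
  { intros t Ht. specialize (H t ltac:(lra)). simpl in H. nra. }
  destruct (int_bound _ _ _ (M / 2) pr2) as [L2 U2]. lra.
  { intros t Ht. destruct (Req_dec t x) as [->|Hne]. rewrite H0; lra.
    assert (Hd3 : Rabs (Geg a (S m) t - Geg a (S m) x) < M / 2).
    { apply Hc. split. split. exact I. auto. simpl. unfold R_dist. rewrite Rabs_left1 by lra. lra. }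
    rewrite H0, Rminus_0_r in Hd3. apply Rabs_def2 in Hd3. lra. }
  apply Rabs_def1; nra.
Qed.

Section K.
Variable a : R.
Hypothesis Ha : -1/2 < a.

Lemma rprod_S f n : rprod f (S n) = rprod f n * f n.
Proof. reflexivity. Qed.

Definition kf (j : nat) := 2 * (INR j + 1 + a) / (INR j + 1 + 2 * a).

Lemma Klead_eq n : Klead a (S n) = rprod kf n.
Proof.
  induction n. reflexivity.
  unfold Klead in *. rewrite Gcoef_SS. rewrite (Gcoef_zero a n (S (S n))) by lia.
  simpl rprod. rewrite <- IHn. unfold kf. unfold Rdiv. ring.
Qed.

Lemma rprod_pos f n : (forall j, 0 < f j) -> 0 < rprod f n.
Proof. intros H. induction n; simpl. lra. apply Rmult_lt_0_compat; auto. Qed.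

Lemma kf_pos j : 0 < kf j.
Proof. unfold kf. pose proof (pos_INR j). apply Rdiv_lt_0_compat; lra. Qed.

Lemma K_pos n : 0 < Klead a (S n).
Proof. rewrite Klead_eq. apply rprod_pos, kf_pos. Qed.

Definition ua (j : nat) := a + 1 + INR j.
Definition u2a (j : nat) := 2 * a + 1 + INR j.

Lemma K_prod n : rprod kf n * rprod u2a n = 2 ^ n * rprod ua n.
Proof.
  induction n. simpl. ring. simpl rprod.
  replace (rprod kf n * kf n * (rprod u2a n * u2a n)) with ((rprod kf n * rprod u2a n) * (kf n * u2a n)) by ring.
  rewrite IHn. unfold kf, u2a, ua. simpl pow. pose proof (pos_INR n). field. lra.
Qed.

Definition gf (i : nat) := (2 * INR i + 1) / (2 * INR i + 1 + 2 * a).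
Definition g0 (j : nat) := rprod gf j.

Lemma g0_pos j : 0 < g0 j.
Proof. apply rprod_pos. intros i. unfold gf. pose proof (pos_INR i). apply Rdiv_lt_0_compat; lra. Qed.

Lemma G0_vals j : Geg a (2 * j) 0 = (-1) ^ j * g0 j /\ Geg a (2 * j + 1) 0 = 0.
Proof.
  induction j as [|j [IH1 IH2]].
  - simpl. rewrite Geg_0, Geg_1. split; [unfold g0; simpl; ring | reflexivity].
  - replace (2 * S j)%nat with (S (S (2 * j))) by lia.
    replace (S (S (2 * j)) + 1)%nat with (S (S (2 * j + 1))) by lia.
    rewrite !Geg_rec. replace (S (2 * j)) with (2 * j + 1)%nat by lia.
    rewrite IH1, IH2. pose proof (den_pos a Ha (2 * j)). pose proof (den_pos a Ha (2 * j + 1)).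
    split. 2: unfold Rdiv; ring.
    unfold g0. simpl rprod. unfold gf. rewrite plus_INR, mult_INR in *. simpl INR in *.
    simpl pow. field. lra.
Qed.

Lemma Qid k : g0 k * rprod u2a (2 * k) / INR (fact (2 * k)) = rprod ua k / INR (fact k).
Proof.
  induction k. simpl. unfold g0. simpl. field.
  replace (2 * S k)%nat with (S (S (2 * k))) by lia.
  unfold g0 in *. rewrite !rprod_S. rewrite !fact_simpl, !mult_INR.
  pose proof (INR_fact_neq_0 (2 * k)). pose proof (INR_fact_neq_0 k).
  assert (E : rprod u2a (2 * k) = rprod ua k / INR (fact k) * INR (fact (2 * k)) / rprod gf k) .
  { rewrite <- IHk. field. split; auto. apply Rgt_not_eq, g0_pos. }
  rewrite E. pose proof (pos_INR k). pose proof (g0_pos k). unfold g0 in H2.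
  set (Gk := rprod gf k) in *. set (Uk := rprod ua k) in *. set (F2 := INR (fact (2 * k))) in *.
  unfold gf, u2a, ua. rewrite !S_INR, mult_INR. replace (INR 2) with 2 by (simpl; ring).
  field. repeat split; lra.
Qed.

Lemma Pid k : g0 (S k) * rprod u2a (2 * k + 1) / INR (fact (2 * k + 2)) = rprod ua k / (2 * INR (fact (S k))).
Proof.
  pose proof (Qid k) as Q.
  replace (2 * k + 1)%nat with (S (2 * k)) by lia. replace (2 * k + 2)%nat with (S (S (2 * k))) by lia.
  unfold g0 in *. rewrite !rprod_S. rewrite !fact_simpl, !mult_INR.
  pose proof (INR_fact_neq_0 (2 * k)). pose proof (INR_fact_neq_0 k).
  assert (E : rprod u2a (2 * k) = rprod ua k / INR (fact k) * INR (fact (2 * k)) / rprod gf k) .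
  { rewrite <- Q. field. split; auto. apply Rgt_not_eq, g0_pos. }
  rewrite E. pose proof (pos_INR k). pose proof (g0_pos k). unfold g0 in H2.
  set (Gk := rprod gf k) in *. set (Uk := rprod ua k) in *. set (F2 := INR (fact (2 * k))) in *.
  unfold gf, u2a, ua. rewrite !S_INR, mult_INR. replace (INR 2) with 2 by (simpl; ring).
  field. repeat split; lra.
Qed.
End K.

Section B.
Variable a : R.
Hypothesis Ha : -1/2 < a.

Lemma E_bound n fd x zeta A M :
  Rabs (fd (S n) zeta) <= A -> Geg a (S n) x = 0 -> 0 <= M ->
  (forall t, -1 <= t <= 1 -> Geg a (S n) t ^ 2 <= M ^ 2) ->
  Rabs (Eerr a n fd x zeta) <= A * (x + 1) * M / (INR (fact (S n)) * Klead a (S n)).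
Proof.
  intros HA Hx HM HG. destruct (Geg_zero_in a Ha n x Hx) as [X1 X2].
  pose proof (K_pos a Ha n). pose proof (INR_fact_lt_0 (S n)).
  assert (HI := int_G_bound a n x M ltac:(lra) HM ltac:(intros t Ht; apply HG; lra)).
  unfold Eerr. rewrite Rabs_mult. unfold Rdiv. rewrite Rabs_mult, Rabs_inv.
  rewrite (Rabs_right (INR (fact (S n)) * Klead a (S n))) by (left; apply Rmult_lt_0_compat; auto).
  assert (0 < / (INR (fact (S n)) * Klead a (S n))) by (apply Rinv_0_lt_compat, Rmult_lt_0_compat; auto).
  replace (A * (x + 1) * M * / (INR (fact (S n)) * Klead a (S n))) with
    (A * / (INR (fact (S n)) * Klead a (S n)) * ((x + 1) * M)) by ring.
  apply Rmult_le_compat; try apply Rabs_pos. apply Rmult_le_pos; [apply Rabs_pos | lra].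
  apply Rmult_le_compat_r; lra. auto.
Qed.

Lemma E_bound_strict n fd x zeta A M :
  Rabs (fd (S n) zeta) <= A -> 0 < A -> Geg a (S n) x = 0 -> 0 < M ->
  (forall t, -1 <= t <= 1 -> Geg a (S n) t ^ 2 <= M ^ 2) ->
  Rabs (Eerr a n fd x zeta) < A * (x + 1) * M / (INR (fact (S n)) * Klead a (S n)).
Proof.
  intros HA HA0 Hx HM HG. destruct (Geg_zero_in a Ha n x Hx) as [X1 X2].
  pose proof (K_pos a Ha n). pose proof (INR_fact_lt_0 (S n)).
  assert (HI := int_G_strict a n x M X1 HM Hx ltac:(intros t Ht; apply HG; lra)).
  unfold Eerr. rewrite Rabs_mult. unfold Rdiv. rewrite Rabs_mult, Rabs_inv.
  rewrite (Rabs_right (INR (fact (S n)) * Klead a (S n))) by (left; apply Rmult_lt_0_compat; auto).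
  assert (0 < / (INR (fact (S n)) * Klead a (S n))) by (apply Rinv_0_lt_compat, Rmult_lt_0_compat; auto).
  replace (A * (x + 1) * M * / (INR (fact (S n)) * Klead a (S n))) with
    (A * / (INR (fact (S n)) * Klead a (S n)) * ((x + 1) * M)) by ring.
  pose proof (Rabs_pos (Rint (Geg a (S n)) (-1) x)).
  apply Rle_lt_trans with (A * / (INR (fact (S n)) * Klead a (S n)) * Rabs (Rint (Geg a (S n)) (-1) x)).
  apply Rmult_le_compat_r; auto. apply Rmult_le_compat_r; lra.
  apply Rmult_lt_compat_l; auto. apply Rmult_lt_0_compat; auto.
Qed.

Lemma Gamma_a1_pos : 0 < Gamma (a + 1).
Proof. apply Gamma_pos; lra. Qed.
Lemma Gamma_2a1_pos : 0 < Gamma (2 * a + 1).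
Proof. apply Gamma_pos; lra. Qed.

Lemma Kexpr n : Klead a (S n) = 2 ^ n * rprod (ua a) n / rprod (u2a a) n.
Proof.
  rewrite Klead_eq. rewrite <- K_prod. field. apply Rgt_not_eq, rprod_pos.
  intros j; unfold u2a; pose proof (pos_INR j); lra. auto.
Qed.

Lemma ua_pos j : 0 < ua a j. Proof. unfold ua; pose proof (pos_INR j); lra. Qed.
Lemma u2a_pos j : 0 < u2a a j. Proof. unfold u2a; pose proof (pos_INR j); lra. Qed.

Lemma bound_i_eq n A x :
  A * (/ 2) ^ n * (x + 1) * Gamma (a + 1) * Gamma (INR n + 2 * a + 1)
    / (Gamma (2 * a + 1) * Gamma (INR n + 2) * Gamma (INR n + a + 1))
  = A * (x + 1) * 1 / (INR (fact (S n)) * Klead a (S n)).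
Proof.
  replace (INR n + 2 * a + 1) with (2 * a + 1 + INR n) by ring.
  replace (INR n + a + 1) with (a + 1 + INR n) by ring.
  replace (INR n + 2) with (INR (S n) + 1) by (rewrite S_INR; ring).
  rewrite Gamma_nat, !Gamma_add_nat by lra.
  rewrite Kexpr.
  change (rprod (fun j => 2 * a + 1 + INR j) n) with (rprod (u2a a) n).
  change (rprod (fun j => a + 1 + INR j) n) with (rprod (ua a) n).
  pose proof Gamma_a1_pos. pose proof Gamma_2a1_pos. pose proof (INR_fact_lt_0 (S n)).
  pose proof (rprod_pos (ua a) n ua_pos). pose proof (rprod_pos (u2a a) n u2a_pos).
  rewrite <- Rinv_pow by lra. assert (0 < 2 ^ n) by (apply pow_lt; lra).
  field. repeat split; lra.
Qed.
End B.

Section C.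
Variable a : R.
Hypothesis Ha : -1/2 < a.
Hypothesis Hneg : a < 0.

Lemma Gamma_a : Gamma a = Gamma (a + 1) / a.
Proof. destruct (Gamma_FE a) as [E _]; try lra. rewrite E. field. lra. Qed.

Lemma bound_ii_eq k A x :
  A * (/ 2) ^ (S (2 * k + 1)) * (x + 1) * Gamma a / Gamma (INR (2 * k + 1) + a + 1)
    * binomR ((INR (2 * k + 1) - 1) / 2 + a) ((INR (2 * k + 1) + 1) / 2)
  = A * (x + 1) * g0 a (S k) / (INR (fact (S (2 * k + 1))) * Klead a (S (2 * k + 1))).
Proof.
  set (n := (2 * k + 1)%nat).
  assert (Hn : INR n = 2 * INR k + 1) by (unfold n; rewrite plus_INR, mult_INR; simpl; ring).
  unfold binomR.
  replace ((INR n - 1) / 2 + a + 1) with (a + 1 + INR k) by (rewrite Hn; field).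
  replace ((INR n + 1) / 2 + 1) with (INR (S k) + 1) by (rewrite Hn, S_INR; field).
  replace ((INR n - 1) / 2 + a - (INR n + 1) / 2 + 1) with a by (rewrite Hn; field).
  replace (INR n + a + 1) with (a + 1 + INR n) by ring.
  rewrite Gamma_nat, !Gamma_add_nat by lra.
  change (rprod (fun j => a + 1 + INR j) n) with (rprod (ua a) n).
  change (rprod (fun j => a + 1 + INR j) k) with (rprod (ua a) k).
  rewrite Gamma_a. rewrite Kexpr by auto.
  assert (P := Pid a Ha k). fold n in P.
  replace (2 * k + 2)%nat with (S n) in P by (unfold n; lia).
  assert (E : g0 a (S k) = rprod (ua a) k / (2 * INR (fact (S k))) * INR (fact (S n)) / rprod (u2a a) n).
  { rewrite <- P. field. split. apply INR_fact_neq_0. apply Rgt_not_eq, rprod_pos, u2a_pos; auto. }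
  rewrite E.
  pose proof (Gamma_a1_pos a Ha). pose proof (INR_fact_lt_0 (S n)). pose proof (INR_fact_lt_0 (S k)).
  pose proof (rprod_pos (ua a) n (ua_pos a Ha)). pose proof (rprod_pos (u2a a) n (u2a_pos a Ha)).
  pose proof (rprod_pos (ua a) k (ua_pos a Ha)).
  rewrite <- Rinv_pow by lra. assert (0 < 2 ^ n) by (apply pow_lt; lra).
  simpl pow. field. repeat split; lra.
Qed.

Lemma Gbound_ii k t : -1 <= t <= 1 -> Geg a (S (2 * k + 1)) t ^ 2 <= g0 a (S k) ^ 2.
Proof.
  intros Ht. eapply Rle_trans. apply (son_neg a Ha (2 * k + 1) t Hneg Ht).
  rewrite sonf0. 
  replace (S (2 * k + 1)) with (2 * S k)%nat by lia.
  destruct (G0_vals a Ha (S k)) as [E1 _]. rewrite E1.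
  assert (D0 : Dg a (2 * S k) 0 = 0).
  { replace (2 * S k)%nat with (S (2 * k + 1)) by lia. pose proof (PN a Ha (2 * k + 1) 0) as P.
    destruct (G0_vals a Ha k) as [_ E2]. rewrite E2 in P.
    replace (Dg a (S (2 * k + 1)) 0) with ((1 - 0 ^ 2) * Dg a (S (2 * k + 1)) 0) by ring. rewrite P. ring. }
  rewrite D0. replace (0 ^ 2 / _) with 0 by (unfold Rdiv; ring). rewrite Rplus_0_r.
  rewrite Rpow_mult_distr. replace (((-1) ^ S k) ^ 2) with 1. lra.
  rewrite <- pow_mult, Nat.mul_comm, pow_mult. replace ((-1) ^ 2) with 1 by ring. rewrite pow1; auto.
Qed.

Definition Miii (k : nat) := (INR (2 * k) + 1) * g0 a k / sqrt ((INR (2 * k) + 1) * (2 * a + INR (2 * k) + 1)).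

Lemma sq_pos k : 0 < (INR (2 * k) + 1) * (2 * a + INR (2 * k) + 1).
Proof. pose proof (pos_INR (2 * k)). apply Rmult_lt_0_compat; lra. Qed.

Lemma Miii_pos k : 0 < Miii k.
Proof.
  unfold Miii. pose proof (pos_INR (2 * k)). pose proof (g0_pos a Ha k).
  apply Rdiv_lt_0_compat. apply Rmult_lt_0_compat; lra. apply sqrt_lt_R0, sq_pos.
Qed.

Lemma Gbound_iii k t : -1 <= t <= 1 -> Geg a (S (2 * k)) t ^ 2 <= Miii k ^ 2.
Proof.
  intros Ht. eapply Rle_trans. apply (son_neg a Ha (2 * k) t Hneg Ht).
  rewrite sonf0.
  replace (S (2 * k)) with (2 * k + 1)%nat by lia.
  destruct (G0_vals a Ha k) as [E1 E2]. rewrite E2.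
  pose proof (PN a Ha (2 * k) 0) as P. rewrite E1 in P.
  replace (S (2 * k)) with (2 * k + 1)%nat in P by lia.
  assert (D0 : Dg a (2 * k + 1) 0 = INR (2 * k + 1) * ((-1) ^ k * g0 a k)).
  { replace (Dg a (2 * k + 1) 0) with ((1 - 0 ^ 2) * Dg a (2 * k + 1) 0) by ring. rewrite P. ring. }
  rewrite D0. unfold Miii. pose proof (sq_pos k).
  unfold Rdiv. rewrite !Rpow_mult_distr. rewrite pow_inv.
  replace (sqrt ((INR (2 * k) + 1) * (2 * a + INR (2 * k) + 1)) ^ 2) with ((INR (2 * k) + 1) * (2 * a + INR (2 * k) + 1))
    by (rewrite <- Rsqr_pow2, Rsqr_sqrt; lra).
  replace (((-1) ^ k) ^ 2) with 1.
  right. rewrite plus_INR. change (INR 1) with 1. pose proof (pos_INR (2 * k)). field. repeat split; lra.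
  rewrite <- pow_mult, Nat.mul_comm, pow_mult. replace ((-1) ^ 2) with 1 by ring. rewrite pow1; auto.
Qed.

Lemma bound_iii_eq k A x :
  A * (/ 2) ^ (2 * k) * (x + 1) * Gamma (a + 1)
     / (sqrt ((INR (2 * k) + 1) * (2 * a + INR (2 * k) + 1)) * Gamma (INR (2 * k) + a + 1))
     * binomR (INR (2 * k) / 2 + a) (INR (2 * k) / 2)
  = A * (x + 1) * Miii k / (INR (fact (S (2 * k))) * Klead a (S (2 * k))).
Proof.
  set (n := (2 * k)%nat).
  assert (Hn : INR n = 2 * INR k) by (unfold n; rewrite mult_INR; simpl; ring).
  unfold binomR, Miii. fold n.
  replace (INR n / 2 + a + 1) with (a + 1 + INR k) by (rewrite Hn; field).
  replace (INR n / 2 + 1) with (INR k + 1) by (rewrite Hn; field).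
  replace (INR n / 2 + a - INR n / 2 + 1) with (a + 1) by field.
  replace (INR n + a + 1) with (a + 1 + INR n) by ring.
  rewrite Gamma_nat, !Gamma_add_nat by lra.
  change (rprod (fun j => a + 1 + INR j) n) with (rprod (ua a) n).
  change (rprod (fun j => a + 1 + INR j) k) with (rprod (ua a) k).
  rewrite Kexpr by auto.
  assert (Q := Qid a Ha k). fold n in Q.
  assert (E : g0 a k = rprod (ua a) k / INR (fact k) * INR (fact n) / rprod (u2a a) n).
  { rewrite <- Q. field. split. apply INR_fact_neq_0. apply Rgt_not_eq, rprod_pos, u2a_pos; auto. }
  rewrite E. rewrite (fact_simpl n), mult_INR, S_INR.
  pose proof (sq_pos k). fold n in H. pose proof (sqrt_lt_R0 _ H).
  pose proof (Gamma_a1_pos a Ha). pose proof (INR_fact_lt_0 n). pose proof (INR_fact_lt_0 k).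
  pose proof (rprod_pos (ua a) n (ua_pos a Ha)). pose proof (rprod_pos (u2a a) n (u2a_pos a Ha)).
  pose proof (rprod_pos (ua a) k (ua_pos a Ha)). pose proof (pos_INR n).
  rewrite <- Rinv_pow by lra. assert (0 < 2 ^ n) by (apply pow_lt; lra).
  field. repeat split; lra.
Qed.
End C.

Lemma ln_trap (t : R) : 0 <= t -> ln (1 + t) <= t * (2 + t) / (2 * (1 + t)).
Proof.
  intros Ht. destruct (Req_dec t 0) as [->|Hne]. replace (1 + 0) with 1 by ring. rewrite ln_1. lra.
  set (h := fun s => s * (2 + s) / (2 * (1 + s)) - ln (1 + s)).
  set (dh := fun s => s ^ 2 / (2 * (1 + s) ^ 2)).
  destruct (MVT_cor2 h dh 0 t) as [c [E Hc]]. lra.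
  { intros c Hc. apply is_derive_Reals. unfold h, dh. auto_derive. lra. field. lra. }
  assert (H0 : h 0 = 0) by (unfold h; replace (1 + 0) with 1 by ring; rewrite ln_1; field). rewrite H0 in E.
  unfold h, dh in E.
  assert (0 <= c ^ 2 / (2 * (1 + c) ^ 2) * (t - 0)).
  { apply Rmult_le_pos. apply Rmult_le_pos. apply pow2_ge_0. left; apply Rinv_0_lt_compat.
    apply Rmult_lt_0_compat. lra. apply pow_lt; lra. lra. }
  lra.
Qed.

Lemma tele_add_low (s : nat -> R) (C : R) :
  (forall m, (1 <= m)%nat -> s m - C * (/ INR m - / INR (S m)) <= s (S m)) ->
  forall m, (1 <= m)%nat -> s 1%nat - C * (1 - / INR m) <= s m.
Proof.
  intros H m Hm. induction m as [|m IH]. lia.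
  destruct (Nat.eq_dec m 0) as [->|Hm0]. simpl. replace (C * (1 - / 1)) with 0 by field. lra.
  specialize (IH ltac:(lia)). specialize (H m ltac:(lia)). lra.
Qed.

Lemma tele_add_up (s : nat -> R) (C : R) :
  (forall m, (1 <= m)%nat -> s (S m) <= s m + C * (/ INR m - / INR (S m))) ->
  forall m, (1 <= m)%nat -> s m <= s 1%nat + C * (1 - / INR m).
Proof.
  intros H m Hm. induction m as [|m IH]. lia.
  destruct (Nat.eq_dec m 0) as [->|Hm0]. simpl. replace (C * (1 - / 1)) with 0 by field. lra.
  specialize (IH ltac:(lia)). specialize (H m ltac:(lia)). lra.
Qed.

Lemma inv_diff m : (1 <= m)%nat -> / INR m - / INR (S m) = / (INR m * (INR m + 1)).
Proof. intros Hm. pose proof (INRpos m Hm). rewrite S_INR. field. lra. Qed.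



Definition stir (n : nat) := ln (INR (fact n)) + INR n - (INR n + / 2) * ln (INR n).

Lemma stir_step m : (1 <= m)%nat -> stir m - / 4 * (/ INR m - / INR (S m)) <= stir (S m).
Proof.
  intros Hm. pose proof (INRpos m Hm) as H0. unfold stir.
  rewrite fact_simpl, mult_INR, ln_mult by (try apply INR_fact_lt_0; apply INRpos; lia).
  rewrite inv_diff by auto. rewrite S_INR.
  assert (E : ln (INR m + 1) = ln (INR m) + ln (1 + / INR m)).
  { rewrite <- ln_mult. f_equal. field. lra. lra. apply Rplus_lt_0_compat. lra. apply Rinv_0_lt_compat; lra. }
  rewrite E.
  pose proof (ln_trap (/ INR m) ltac:(left; apply Rinv_0_lt_compat; lra)) as T.
  replace (/ INR m * (2 + / INR m) / (2 * (1 + / INR m))) with ((2 * INR m + 1) / (2 * INR m * (INR m + 1))) in T by (field; lra).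
  assert (Hk : (INR m + / 2) * ln (1 + / INR m) <= 1 + / 4 * / (INR m * (INR m + 1))).
  { eapply Rle_trans. apply Rmult_le_compat_l. lra. exact T. right. field. lra. }
  lra.
Qed.

Lemma stir_low n : (1 <= n)%nat -> 3 / 4 <= stir n.
Proof.
  intros Hn. pose proof (tele_add_low stir (/ 4) stir_step n Hn).
  assert (stir 1 = 1) by (unfold stir; simpl; rewrite ln_1; field).
  pose proof (INRpos n Hn).
  assert (0 < / INR n) by (apply Rinv_0_lt_compat; lra). lra.
Qed.

Definition prf (b c : R) (j : nat) := (INR j + 1 + b) / (INR j + 1 + c).
Definition pr (b c : R) (n : nat) := rprod (prf b c) n.

Lemma pr_pos b c n : -1 < b -> -1 < c -> 0 < pr b c n.
Proof.
  intros Hb Hc. induction n. unfold pr; simpl; lra. unfold pr in *. simpl rprod. apply Rmult_lt_0_compat; auto.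
  unfold prf. pose proof (pos_INR n). apply Rdiv_lt_0_compat; lra.
Qed.

Definition Tf (b c : R) (n : nat) := (c - b) * ln (INR n) + ln (pr b c n).

Lemma frac_bound (d b p : R) : 1 <= p -> -1 < b ->
  Rabs (d / (p + 1) - d / (p + 1 + b)) <= Rabs d * Rabs b / (p * (p + 1)).
Proof.
  intros Hp Hb.
  replace (d / (p + 1) - d / (p + 1 + b)) with (d * b * / ((p + 1) * (p + 1 + b))) by (field; lra).
  rewrite !Rabs_mult, Rabs_inv. rewrite (Rabs_right ((p + 1) * (p + 1 + b))) by (left; apply Rmult_lt_0_compat; lra).
  unfold Rdiv. apply Rmult_le_compat_l. apply Rmult_le_pos; apply Rabs_pos.
  apply Rinv_le_contravar. apply Rmult_lt_0_compat; lra. 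
  rewrite (Rmult_comm p). apply Rmult_le_compat_l; lra.
Qed.

Lemma T_step b c n : -1 < b -> -1 < c -> (1 <= n)%nat ->
  Rabs (Tf b c (S n) - Tf b c n) <= (Rabs (c - b) * (1 + Rabs b + Rabs c)) * (/ INR n - / INR (S n)).
Proof.
  intros Hb Hc Hn. pose proof (INRpos n Hn) as H0.
  assert (Hp : 1 <= INR n) by (replace 1 with (INR 1) by reflexivity; apply le_INR; auto).
  set (d := c - b).
  assert (E : Tf b c (S n) - Tf b c n = d * (ln (INR (S n)) - ln (INR n)) + ln (prf b c n)).
  { unfold Tf, pr. simpl rprod. rewrite ln_mult. fold d. ring.
    apply pr_pos; auto. unfold prf. apply Rdiv_lt_0_compat; lra. }
  rewrite E. destruct (ln_S_bounds n Hn) as [L1 L2].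
  rewrite S_INR in *.
  unfold prf. 
  assert (Pq : 0 < (INR n + 1 + b) / (INR n + 1 + c)) by (apply Rdiv_lt_0_compat; lra).
  pose proof (ln_ge_1mi _ Pq) as M1. pose proof (ln_le_xm1 _ Pq) as M2.
  replace (1 - / ((INR n + 1 + b) / (INR n + 1 + c))) with (- d / (INR n + 1 + b)) in M1 by (unfold d; field; lra).
  replace ((INR n + 1 + b) / (INR n + 1 + c) - 1) with (- d / (INR n + 1 + c)) in M2 by (unfold d; field; lra).
  pose proof (frac_bound d b (INR n) Hp Hb) as F1. pose proof (frac_bound d c (INR n) Hp Hc) as F2.
  apply Rabs_le_between in F1. apply Rabs_le_between in F2.
  set (l := ln (INR n + 1) - ln (INR n)) in *.
  set (w := / (INR n * (INR n + 1))).
  assert (Ew : / INR n - / (INR n + 1) = w) by (unfold w; field; lra). rewrite Ew.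
  assert (Hl : 0 <= l - / (INR n + 1) <= w) by (rewrite <- Ew; lra).
  assert (Hdl : Rabs (d * (l - / (INR n + 1))) <= Rabs d * w).
  { rewrite Rabs_mult. apply Rmult_le_compat_l. apply Rabs_pos. rewrite Rabs_right; lra. }
  apply Rabs_le_between in Hdl.
  assert (w0 : 0 < w) by (unfold w; apply Rinv_0_lt_compat; nra).
  replace (Rabs d * Rabs b / (INR n * (INR n + 1))) with (Rabs d * Rabs b * w) in F1 by (unfold w, Rdiv; ring).
  replace (Rabs d * Rabs c / (INR n * (INR n + 1))) with (Rabs d * Rabs c * w) in F2 by (unfold w, Rdiv; ring).
  assert (d * l = d * (l - / (INR n + 1)) + d / (INR n + 1)) by (unfold Rdiv; ring).
  pose proof (Rabs_pos d). pose proof (Rabs_pos b). pose proof (Rabs_pos c).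
  apply Rabs_le. split.
  - assert (Rabs d * w * (1 + Rabs b + Rabs c) >= Rabs d * w + Rabs d * Rabs b * w) by nra.
    unfold Rdiv in *. nra.
  - assert (Rabs d * w * (1 + Rabs b + Rabs c) >= Rabs d * w + Rabs d * Rabs c * w) by nra.
    unfold Rdiv in *. nra.
Qed.

Lemma pr_bounds b c : -1 < b -> -1 < c -> exists L U, 0 < L /\ 0 < U /\
  forall n, (1 <= n)%nat -> L <= exp ((c - b) * ln (INR n)) * pr b c n <= U.
Proof.
  intros Hb Hc. set (K := Rabs (c - b) * (1 + Rabs b + Rabs c)).
  assert (K0 : 0 <= K) by (unfold K; pose proof (Rabs_pos (c - b)); pose proof (Rabs_pos b); pose proof (Rabs_pos c); nra).
  exists (exp (Tf b c 1 - K)), (exp (Tf b c 1 + K)). split. apply exp_pos. split. apply exp_pos.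
  intros n Hn.
  assert (E : exp ((c - b) * ln (INR n)) * pr b c n = exp (Tf b c n)).
  { unfold Tf. rewrite exp_plus, exp_ln; auto. apply pr_pos; auto. }
  rewrite E.
  assert (Hs : forall m, (1 <= m)%nat -> Rabs (Tf b c (S m) - Tf b c m) <= K * (/ INR m - / INR (S m))) by (intros; apply T_step; auto).
  pose proof (tele_add_low (Tf b c) K ltac:(intros m Hm; specialize (Hs m Hm); apply Rabs_le_between in Hs; lra) n Hn).
  pose proof (tele_add_up (Tf b c) K ltac:(intros m Hm; specialize (Hs m Hm); apply Rabs_le_between in Hs; lra) n Hn).
  pose proof (INRpos n Hn).
  assert (0 < / INR n) by (apply Rinv_0_lt_compat; lra).
  assert (1 <= INR n) by (replace 1 with (INR 1) by reflexivity; apply le_INR; auto).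
  assert (/ INR n <= 1) by (rewrite <- Rinv_1; apply Rinv_le_contravar; lra).
  split; apply exp_le; nra.
Qed.

Section Asym.
Variable a : R.
Hypothesis Ha : -1/2 < a.

Lemma g0_pr k : g0 a k = pr (-1/2) (a - 1/2) k.
Proof.
  induction k. reflexivity. unfold g0, pr in *. rewrite !rprod_S, IHk. f_equal.
  unfold gf, prf. pose proof (pos_INR k). field. lra.
Qed.

Lemma K_pr n : Klead a (S n) = 2 ^ n * pr a (2 * a) n.
Proof.
  rewrite Kexpr by auto. unfold Rdiv. rewrite Rmult_assoc. f_equal.
  induction n. unfold pr; simpl; field. unfold pr in *. rewrite !rprod_S, <- IHn.
  unfold ua, u2a, prf. pose proof (pos_INR n).
  pose proof (rprod_pos (u2a a) n (u2a_pos a Ha)). unfold u2a in H0.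
  field. lra.
Qed.

Lemma exp_pow_n n : exp 1 ^ n = exp (INR n).
Proof. induction n. simpl. rewrite exp_0; auto. rewrite S_INR, exp_plus, <- IHn. simpl. ring. Qed.

Lemma asym_base (L : R) n : (1 <= n)%nat -> 0 < L ->
  L <= exp ((2 * a - a) * ln (INR n)) * pr a (2 * a) n ->
  / (INR (fact (S n)) * Klead a (S n)) <=
  / L * (exp 1 / 2) ^ n * Rpower (INR n) (- INR n - 3 / 2) * exp (a * ln (INR n)).
Proof.
  intros Hn HL HP. rewrite K_pr.
  replace (2 * a - a) with a in HP by ring.
  pose proof (INRpos n Hn) as Hn0.
  pose proof (pr_pos a (2 * a) n ltac:(lra) ltac:(lra)) as Hpr.
  pose proof (INR_fact_lt_0 n) as Hf.
  assert (Hs := stir_low n Hn). unfold stir in Hs.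
  set (P := INR (fact (S n)) * (2 ^ n * pr a (2 * a) n)).
  assert (HPpos : 0 < P) by (unfold P; apply Rmult_lt_0_compat; [apply INR_fact_lt_0 | apply Rmult_lt_0_compat; [apply pow_lt; lra | auto]]).
  assert (E : / L * (exp 1 / 2) ^ n * Rpower (INR n) (- INR n - 3 / 2) * exp (a * ln (INR n)) * P
     = / L * (exp (a * ln (INR n)) * pr a (2 * a) n) *
       ((INR n + 1) / INR n) * exp (ln (INR (fact n)) + INR n - (INR n + / 2) * ln (INR n))).
  { unfold P, Rpower. rewrite fact_simpl, mult_INR, S_INR.
    unfold Rdiv at 1. rewrite Rpow_mult_distr, exp_pow_n.
    replace (ln (INR (fact n)) + INR n - (INR n + / 2) * ln (INR n)) with
      (ln (INR (fact n)) + (INR n + ((- INR n - 3 / 2) * ln (INR n) + ln (INR n)))) by field.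
    rewrite !exp_plus, exp_ln, exp_ln by auto.
    rewrite <- Rinv_pow by lra. pose proof (pow_lt 2 n ltac:(lra)).
    field. repeat split; lra. }
  apply (Rmult_le_reg_r P); auto. rewrite Rinv_l by lra. rewrite E.
  assert (1 <= exp (ln (INR (fact n)) + INR n - (INR n + / 2) * ln (INR n))).
  { rewrite <- exp_0. apply exp_le. lra. }
  assert (1 <= (INR n + 1) / INR n) by (apply (Rmult_le_reg_r (INR n)); auto; unfold Rdiv; rewrite Rmult_assoc, Rinv_l; lra).
  assert (1 <= / L * (exp (a * ln (INR n)) * pr a (2 * a) n)).
  { apply (Rmult_le_reg_l L); auto. rewrite <- Rmult_assoc, Rinv_r; lra. }
  assert (1 * 1 <= / L * (exp (a * ln (INR n)) * pr a (2 * a) n) * ((INR n + 1) / INR n)) by (apply Rmult_le_compat; lra).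
  assert (1 * 1 * 1 <= / L * (exp (a * ln (INR n)) * pr a (2 * a) n) * ((INR n + 1) / INR n) * exp (ln (INR (fact n)) + INR n - (INR n + / 2) * ln (INR n))) by (apply Rmult_le_compat; lra).
  lra.
Qed.
End Asym.

Section Mb.
Variable a : R.
Hypothesis Ha : -1/2 < a.
Hypothesis Hneg : a < 0.

Lemma ln_mono_nat p q : (1 <= p)%nat -> (p <= q)%nat -> ln (INR p) <= ln (INR q).
Proof. intros. apply ln_le. apply INRpos; auto. apply le_INR; auto. Qed.

Lemma Miii_le k : Miii a k <= g0 a k / (1 + 2 * a).
Proof.
  unfold Miii. replace (2 * a + INR (2 * k) + 1) with (2 * a + (INR (2 * k) + 1)) by ring. set (p := INR (2 * k) + 1).
  assert (Hp : 1 <= p) by (unfold p; pose proof (pos_INR (2 * k)); lra).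
  pose proof (g0_pos a Ha k).
  assert (HP : 0 < p * (2 * a + p)) by (apply Rmult_lt_0_compat; lra).
  assert (S1 : p * (1 + 2 * a) <= sqrt (p * (2 * a + p))).
  { assert (Eq : sqrt ((p * (1 + 2 * a)) ^ 2) = p * (1 + 2 * a)).
    { apply sqrt_pow2. apply Rmult_le_pos; lra. }
    rewrite <- Eq. apply sqrt_le_1_alt. simpl. 
    assert (Hq : 0 <= p * (p - 1)) by (apply Rmult_le_pos; lra).
    assert (H1 : p * p * (1 + 2 * a) <= p * (2 * a + p)).
    { assert (X : p * (2 * a + p) - p * p * (1 + 2 * a) = (- a) * (2 * (p * (p - 1)))) by ring.
      assert (0 <= (- a) * (2 * (p * (p - 1)))) by (apply Rmult_le_pos; lra). lra. }
    assert (H2 : (1 + 2 * a) * (1 + 2 * a) <= (1 + 2 * a)) by nra.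
    assert (H3 : p * p * ((1 + 2 * a) * (1 + 2 * a)) <= p * p * (1 + 2 * a)) by (apply Rmult_le_compat_l; nra).
    replace (p * (1 + 2 * a) * (p * (1 + 2 * a) * 1)) with (p * p * ((1 + 2 * a) * (1 + 2 * a))) by ring.
    lra. }
  assert (0 < sqrt (p * (2 * a + p))) by (apply sqrt_lt_R0; auto).
  set (P := p * (2 * a + p)) in *.
  replace (p * g0 a k / sqrt P) with (g0 a k * (p / sqrt P)) by (field; lra).
  change (g0 a k / (1 + 2 * a)) with (g0 a k * / (1 + 2 * a)). apply Rmult_le_compat_l. lra.
  apply (Rmult_le_reg_r (sqrt P)); auto. unfold Rdiv. rewrite Rmult_assoc, Rinv_l, Rmult_1_r by lra.
  apply (Rmult_le_reg_l (1 + 2 * a)). lra. rewrite <- Rmult_assoc, Rinv_r, Rmult_1_l by lra. lra.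
Qed.

Lemma Mbound (U : R) n : (1 <= n)%nat -> 0 < U ->
  (forall k, (1 <= k)%nat -> exp ((a - 1/2 - -1/2) * ln (INR k)) * pr (-1/2) (a - 1/2) k <= U) ->
  exists M, 0 <= M /\ M <= U / (1 + 2 * a) * exp (- a * ln (INR n)) /\
    (forall t, -1 <= t <= 1 -> Geg a (S n) t ^ 2 <= M ^ 2).
Proof.
  intros Hn HU HB.
  assert (HB' : forall k, (1 <= k)%nat -> (k <= n)%nat -> g0 a k <= U * exp (- a * ln (INR n))).
  { intros k Hk Hkn. rewrite g0_pr by auto. specialize (HB k Hk).
    replace (a - 1/2 - -1/2) with a in HB by field.
    pose proof (exp_pos (a * ln (INR k))).
    assert (pr (-1/2) (a - 1/2) k <= U * exp (- a * ln (INR k))).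
    { apply (Rmult_le_reg_l (exp (a * ln (INR k)))); auto.
      rewrite <- Rmult_assoc, (Rmult_comm _ U), Rmult_assoc, <- exp_plus.
      replace (a * ln (INR k) + - a * ln (INR k)) with 0 by ring. rewrite exp_0. lra. }
    eapply Rle_trans. apply H0. apply Rmult_le_compat_l. lra. apply exp_le.
    pose proof (ln_mono_nat k n Hk Hkn). nra. }
  assert (HU2 : U <= U / (1 + 2 * a)).
  { apply (Rmult_le_reg_r (1 + 2 * a)). lra. unfold Rdiv. rewrite Rmult_assoc, Rinv_l by lra. nra. }
  pose proof (exp_pos (- a * ln (INR n))).
  destruct (Nat.Even_or_Odd n) as [[k Hk] | [k Hk]].
  - subst n. assert (k1 : (1 <= k)%nat) by lia.
    exists (Miii a k). split. left; apply Miii_pos; auto. split.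
    + eapply Rle_trans. apply Miii_le.
      replace (U / (1 + 2 * a) * exp (- a * ln (INR (2 * k)))) with ((U * exp (- a * ln (INR (2 * k)))) / (1 + 2 * a)) by (field; lra).
      unfold Rdiv. apply Rmult_le_compat_r.
      left; apply Rinv_0_lt_compat; lra. apply HB'; lia.
    + intros t Ht. apply Gbound_iii; auto.
  - subst n. exists (g0 a (S k)). split. left; apply g0_pos; auto. split.
    + eapply Rle_trans. apply HB'; lia. apply Rmult_le_compat_r; lra.
    + intros t Ht. apply Gbound_ii; auto.
Qed.
End Mb.

Theorem theorem4 (a : R) (Ha : -1/2 < a) (A : R) (HA : 0 < A) :
  exists D1 D2 : R, 0 < D1 /\ 0 < D2 /\
  (forall (n : nat) (f : R -> R) (fd : nat -> R -> R),
     derivs_C (S n) f fd ->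
     (forall y, Icc y -> Rabs (fd (S n) y) <= A) ->
     forall x, Geg a (S n) x = 0 ->
     forall zeta, Icc zeta ->
       (0 <= a ->
          Rabs (Eerr a n fd x zeta) <=
          A * (/ 2) ^ n * (x + 1) * Gamma (a + 1) * Gamma (INR n + 2 * a + 1)
          / (Gamma (2 * a + 1) * Gamma (INR n + 2) * Gamma (INR n + a + 1))) /\
       ((exists m : nat, n = (2 * m + 1)%nat) -> a < 0 ->
          Rabs (Eerr a n fd x zeta) <=
          A * (/ 2) ^ (S n) * (x + 1) * Gamma a / Gamma (INR n + a + 1)
          * binomR ((INR n - 1) / 2 + a) ((INR n + 1) / 2)) /\
       ((exists m : nat, n = (2 * m)%nat) -> a < 0 ->
          Rabs (Eerr a n fd x zeta) <
          A * (/ 2) ^ n * (x + 1) * Gamma (a + 1)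
          / (sqrt ((INR n + 1) * (2 * a + INR n + 1)) * Gamma (INR n + a + 1))
          * binomR (INR n / 2 + a) (INR n / 2))) /\
  (0 <= a ->
     forall eps, 0 < eps -> exists N : nat, forall n : nat, (N <= n)%nat ->
     forall (f : R -> R) (fd : nat -> R -> R),
     derivs_C (S n) f fd ->
     (forall y, Icc y -> Rabs (fd (S n) y) <= A) ->
     forall x, Geg a (S n) x = 0 ->
     forall zeta, Icc zeta ->
       Rabs (Eerr a n fd x zeta) <=
       (1 + eps) * (A * D1) * (exp 1 / 2) ^ n * (x + 1)
       * Rpower (INR n) (a - INR n - 3/2)) /\
  (a < 0 ->
     forall eps, 0 < eps -> exists N : nat, forall n : nat, (N <= n)%nat ->
     forall (f : R -> R) (fd : nat -> R -> R),
     derivs_C (S n) f fd ->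
     (forall y, Icc y -> Rabs (fd (S n) y) <= A) ->
     forall x, Geg a (S n) x = 0 ->
     forall zeta, Icc zeta ->
       Rabs (Eerr a n fd x zeta) <=
       (1 + eps) * (A * D1 * D2) * (exp 1 / 2) ^ n * (x + 1)
       * Rpower (INR n) (- INR n - 3/2)).
Proof.
  destruct (pr_bounds a (2 * a) ltac:(lra) ltac:(lra)) as [L [U0 [HL [_ HLB]]]].
  destruct (pr_bounds (-1/2) (a - 1/2) ltac:(lra) ltac:(lra)) as [L2 [U [_ [HU HUB]]]].
  set (D2 := U / (1 + 2 * a)).
  assert (HD2 : 0 < D2) by (unfold D2; apply Rdiv_lt_0_compat; lra).
  exists (/ L), D2. split. apply Rinv_0_lt_compat; auto. split; auto.
  split; [|split].
  - intros n f fd _ Hb x Hx zeta Hz. assert (Hfd := Hb zeta Hz).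
    split; [|split].
    + intros Ha0. rewrite bound_i_eq by auto.
      apply E_bound; auto. lra. intros t Ht. rewrite pow1. apply son_pos; auto.
    + intros [k ->] Hneg. rewrite bound_ii_eq by auto.
      apply E_bound; auto. left; apply g0_pos; auto. intros t Ht. apply Gbound_ii; auto.
    + intros [k ->] Hneg. rewrite bound_iii_eq by auto.
      apply E_bound_strict; auto. apply Miii_pos; auto. intros t Ht. apply Gbound_iii; auto.
  - intros Ha0 eps Heps. exists 1%nat. intros n Hn f fd _ Hb x Hx zeta Hz.
    assert (Hfd := Hb zeta Hz). destruct (Geg_zero_in a Ha n x Hx) as [X1 X2].
    eapply Rle_trans. apply (E_bound a Ha n fd x zeta A 1); auto. lra.
    intros t Ht. rewrite pow1. apply son_pos; auto.
    pose proof (asym_base a Ha L n Hn HL (proj1 (HLB n Hn))) as AB.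
    unfold Rdiv at 1. rewrite Rmult_assoc.
    assert (ER : Rpower (INR n) (a - INR n - 3 / 2) = Rpower (INR n) (- INR n - 3 / 2) * exp (a * ln (INR n))).
    { unfold Rpower. rewrite <- exp_plus. f_equal. ring. }
    rewrite ER.
    set (R0 := / L * (exp 1 / 2) ^ n * Rpower (INR n) (- INR n - 3 / 2) * exp (a * ln (INR n))) in AB.
    assert (0 <= A * (x + 1)) by (apply Rmult_le_pos; lra).
    assert (0 <= R0) by (eapply Rle_trans; [|exact AB]; left; apply Rinv_0_lt_compat, Rmult_lt_0_compat; [apply INR_fact_lt_0| apply K_pos; auto]).
    replace ((1 + eps) * (A * / L) * (exp 1 / 2) ^ n * (x + 1) * (Rpower (INR n) (- INR n - 3 / 2) * exp (a * ln (INR n))))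
      with ((1 + eps) * (A * (x + 1) * R0)) by (unfold R0; ring).
    rewrite Rmult_1_l.
    assert (A * (x + 1) * / (INR (fact (S n)) * Klead a (S n)) <= A * (x + 1) * R0) by (apply Rmult_le_compat_l; auto).
    assert (0 <= A * (x + 1) * R0) by (apply Rmult_le_pos; auto).
    nra.
  - intros Hneg eps Heps. exists 1%nat. intros n Hn f fd _ Hb x Hx zeta Hz.
    assert (Hfd := Hb zeta Hz). destruct (Geg_zero_in a Ha n x Hx) as [X1 X2].
    destruct (Mbound a Ha Hneg U n Hn HU (fun k Hk => proj2 (HUB k Hk))) as [M [HM0 [HM1 HMG]]].
    eapply Rle_trans. apply (E_bound a Ha n fd x zeta A M); auto.
    pose proof (asym_base a Ha L n Hn HL (proj1 (HLB n Hn))) as AB.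
    set (R0 := / L * (exp 1 / 2) ^ n * Rpower (INR n) (- INR n - 3 / 2) * exp (a * ln (INR n))) in AB.
    assert (0 <= A * (x + 1)) by (apply Rmult_le_pos; lra).
    assert (HFK : 0 < / (INR (fact (S n)) * Klead a (S n))) by (apply Rinv_0_lt_compat, Rmult_lt_0_compat; [apply INR_fact_lt_0| apply K_pos; auto]).
    assert (0 <= R0) by lra.
    fold D2 in HM1.
    assert (E1 : A * (x + 1) * M / (INR (fact (S n)) * Klead a (S n)) <=
                 A * (x + 1) * (D2 * exp (- a * ln (INR n))) * R0).
    { unfold Rdiv. apply Rmult_le_compat; auto. apply Rmult_le_pos; auto. left; auto.
      apply Rmult_le_compat_l; auto. }
    assert (E2 : A * (x + 1) * (D2 * exp (- a * ln (INR n))) * R0 =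
                 A * / L * D2 * (exp 1 / 2) ^ n * (x + 1) * Rpower (INR n) (- INR n - 3 / 2)).
    { unfold R0.
      transitivity (A * (x + 1) * D2 * / L * (exp 1 / 2) ^ n * Rpower (INR n) (- INR n - 3 / 2) * (exp (- a * ln (INR n)) * exp (a * ln (INR n)))).
      ring. rewrite <- exp_plus. replace (- a * ln (INR n) + a * ln (INR n)) with 0 by ring. rewrite exp_0. ring. }
    assert (0 <= A * / L * D2 * (exp 1 / 2) ^ n * (x + 1) * Rpower (INR n) (- INR n - 3 / 2)).
    { rewrite <- E2. apply Rmult_le_pos; auto. apply Rmult_le_pos; auto. apply Rmult_le_pos. lra. left; apply exp_pos. }
    nra.
Qed.
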